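(* Let $\phi:\mathbb D\to\mathbb D$ be analytic with $\phi(0)=0$ and $|\phi'(0)|<1$. Then there exists $\rho>0$ such that for all integers $m,n\ge0$, $$|\widehat{\phi^n}(m)|\le\exp\Big(-\tfrac12\big[(1+\rho)n-m\big]\Big),$$ where $\widehat{\phi^n}(m)$ denotes the $m$-th Taylor coefficient of $\phi^n$ at $0$.
   Context: $\mathbb D$ is the open unit disk; $\phi^n$ is the $n$-th power (pointwise product) of $\phi$. *)

(* Defs.v *)
From Stdlib Require Import Reals.
From Coquelicot Require Export Coquelicot.
From Stdlib Require Import Factorial.
Open Scope R_scope.

Definition cderiv_at (f : C -> C) (z l : C) : Prop :=
  @is_derive C_AbsRing C_NormedModule f z l.

Definition in_disk (z : C) : Prop := Cmod z < 1.

Definition holo_on_disk (f : C -> C) : Prop :=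
  forall z, in_disk z -> exists l, cderiv_at f z l.

Fixpoint cpow (w : C) (n : nat) : C :=
  match n with O => RtoC 1 | S k => Cmult w (cpow w k) end.

Definition is_taylor_coef (f : C -> C) (m : nat) (c : C) : Prop :=
  exists g : nat -> C -> C,
    g O = f /\
    (forall k z, in_disk z -> cderiv_at (g k) z (g (S k) z)) /\
    c = Cdiv (g m (RtoC 0)) (RtoC (INR (fact m))).

(* Main.v *)
Require Import Defs.
From Stdlib Require Import Reals Lra Lia Psatz Factorial Classical ClassicalEpsilon.
From Coquelicot Require Import Coquelicot.
Open Scope R_scope.

Definition ed (f : C -> C) (z l : C) : Prop :=
  forall eps, 0 < eps -> exists delta, 0 < delta /\
    forall w, Cmod (w - z) < delta ->
      Cmod (f w - f z - l * (w - z)) <= eps * Cmod (w - z).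

Lemma cderiv_ed f z l : cderiv_at f z l -> ed f z l.
Proof.
  intros [_ H] eps Heps.
  specialize (H z (fun P HP => HP)).
  destruct (H (mkposreal eps Heps)) as [d Hd].
  exists d; split; [apply cond_pos|].
  intros w Hw. specialize (Hd w (@norm_compat1 C_AbsRing (AbsRing_NormedModule C_AbsRing) z w d Hw)).
  change (Cmod (f w - f z - (w - z) * l) <= eps * Cmod (w - z)) in Hd.
  rewrite (Cmult_comm l). exact Hd.
Qed.

Lemma ed_cderiv f z l : ed f z l -> cderiv_at f z l.
Proof.
  intros H. split; [apply is_linear_scal_l|].
  intros x Hx. apply (@is_filter_lim_locally_unique C_AbsRing (AbsRing_NormedModule C_AbsRing)) in Hx. subst x.
  intros [eps Heps].
  destruct (H eps Heps) as [d [Hd0 Hd]].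
  eapply filter_imp; [|apply (@locally_ball_norm C_AbsRing (AbsRing_NormedModule C_AbsRing) z (mkposreal d Hd0))].
  intros w Hw. simpl. 
  change (Cmod (f w - f z - (w - z) * l) <= eps * Cmod (w - z)).
  rewrite (Cmult_comm (w - z) l). apply Hd. exact Hw.
Qed.

Lemma K_ed f z l : @is_derive C_AbsRing (AbsRing_NormedModule C_AbsRing) f z l -> ed f z l.
Proof.
  intros [_ H] eps Heps.
  specialize (H z (fun P HP => HP)).
  destruct (H (mkposreal eps Heps)) as [d Hd].
  exists d; split; [apply cond_pos|].
  intros w Hw. specialize (Hd w (@norm_compat1 C_AbsRing (AbsRing_NormedModule C_AbsRing) z w d Hw)).
  change (Cmod (f w - f z - (w - z) * l) <= eps * Cmod (w - z)) in Hd.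
  rewrite (Cmult_comm l). exact Hd.
Qed.

Lemma ed_K f z l : ed f z l -> @is_derive C_AbsRing (AbsRing_NormedModule C_AbsRing) f z l.
Proof.
  intros H. split; [apply is_linear_scal_l|].
  intros x Hx. apply (@is_filter_lim_locally_unique C_AbsRing (AbsRing_NormedModule C_AbsRing)) in Hx. subst x.
  intros [eps Heps].
  destruct (H eps Heps) as [d [Hd0 Hd]].
  eapply filter_imp; [|apply (@locally_ball_norm C_AbsRing (AbsRing_NormedModule C_AbsRing) z (mkposreal d Hd0))].
  intros w Hw. simpl. 
  change (Cmod (f w - f z - (w - z) * l) <= eps * Cmod (w - z)).
  rewrite (Cmult_comm (w - z) l). apply Hd. exact Hw.
Qed.

Lemma K_cderiv f z l : @is_derive C_AbsRing (AbsRing_NormedModule C_AbsRing) f z l -> cderiv_at f z l.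
Proof. intros; apply ed_cderiv, K_ed; auto. Qed.
Lemma cderiv_K f z l : cderiv_at f z l -> @is_derive C_AbsRing (AbsRing_NormedModule C_AbsRing) f z l.
Proof. intros; apply ed_K, cderiv_ed; auto. Qed.

Lemma Cmod_sym (a b : C) : Cmod (a - b) = Cmod (b - a).
Proof. rewrite <- Cmod_opp. f_equal. ring. Qed.

Lemma Cmod_fst (z : C) : Rabs (fst z) <= Cmod z.
Proof. apply re_le_Cmod. Qed.

Lemma Cmod_snd (z : C) : Rabs (snd z) <= Cmod z.
Proof. pose proof (Rmax_Cmod z). pose proof (Rmax_r (Rabs (fst z)) (Rabs (snd z))). lra. Qed.

Lemma Cmod_le_sum (z : C) : Cmod z <= Rabs (fst z) + Rabs (snd z).
Proof.
  destruct z as [x y]. unfold Cmod; simpl.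
  apply Rsqr_incr_0_var.
  - rewrite Rsqr_sqrt by nra. unfold Rsqr.
    pose proof (Rabs_pos x). pose proof (Rabs_pos y).
    assert (Rabs x * Rabs x = x * x) by (rewrite <- Rabs_mult; apply Rabs_pos_eq; nra).
    assert (Rabs y * Rabs y = y * y) by (rewrite <- Rabs_mult; apply Rabs_pos_eq; nra).
    nra.
  - pose proof (Rabs_pos x). pose proof (Rabs_pos y). lra.
Qed.

Lemma Cmod_tri3 (a b : C) : Cmod a <= Cmod (a - b) + Cmod b.
Proof. replace a with ((a - b) + b)%C at 1 by ring. apply Cmod_triangle. Qed.

Lemma Cmod_RtoC_mult (t : R) (a : C) : Cmod (RtoC t * a) = Rabs t * Cmod a.
Proof. rewrite Cmod_mult, Cmod_R. reflexivity. Qed.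

Definition ccont (f : C -> C) (z : C) : Prop :=
  forall eps, 0 < eps -> exists d, 0 < d /\
    forall w, Cmod (w - z) < d -> Cmod (f w - f z) < eps.

Lemma ed_ccont f z l : ed f z l -> ccont f z.
Proof.
  intros H eps Heps. destruct (H 1 Rlt_0_1) as [d [Hd0 Hd]].
  pose proof (Cmod_ge_0 l).
  exists (Rmin d (eps / (Cmod l + 2))). split.
  { apply Rmin_pos; auto. apply Rdiv_lt_0_compat; lra. }
  intros w Hw.
  assert (Hw1 : Cmod (w - z) < d) by (eapply Rlt_le_trans; [exact Hw| apply Rmin_l]).
  assert (Hw2 : Cmod (w - z) < eps / (Cmod l + 2)) by (eapply Rlt_le_trans; [exact Hw| apply Rmin_r]).
  specialize (Hd w Hw1).
  pose proof (Cmod_tri3 (f w - f z) (l * (w - z))) as T.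
  rewrite Cmod_mult in T. pose proof (Cmod_ge_0 (w - z)).
  assert (Cmod (w - z) * (Cmod l + 2) < eps).
  { apply (Rmult_lt_compat_r (Cmod l + 2)) in Hw2; [|lra].
    unfold Rdiv in Hw2. rewrite Rmult_assoc, Rinv_l in Hw2; lra. }
  nra.
Qed.

Lemma cderiv_ccont f z l : cderiv_at f z l -> ccont f z.
Proof. intros H; apply (ed_ccont f z l), cderiv_ed, H. Qed.

Lemma cderiv_const (c z : C) : cderiv_at (fun _ => c) z 0%C.
Proof. apply (@is_derive_const C_AbsRing C_NormedModule). Qed.

Lemma cderiv_id (z : C) : cderiv_at (fun w => w) z 1%C.
Proof. apply K_cderiv. exact (@is_derive_id C_AbsRing z). Qed.

Lemma cderiv_plus f g z a b : cderiv_at f z a -> cderiv_at g z b ->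
  cderiv_at (fun w => f w + g w)%C z (a + b)%C.
Proof. intros Ha Hb. apply (@is_derive_plus C_AbsRing C_NormedModule); auto. Qed.

Lemma cderiv_mult f g z a b : cderiv_at f z a -> cderiv_at g z b ->
  cderiv_at (fun w => f w * g w)%C z (a * g z + f z * b)%C.
Proof.
  intros Ha Hb. apply K_cderiv. apply (@is_derive_mult C_AbsRing); try apply cderiv_K; auto.
  intros; apply Cmult_comm.
Qed.

Lemma cderiv_ext f g z l : (forall w, f w = g w) -> cderiv_at f z l -> cderiv_at g z l.
Proof.
  intros H Hf. apply (@is_derive_ext C_AbsRing C_NormedModule f g); auto.
Qed.

Lemma cderiv_comp f g z a b : cderiv_at f (g z) a -> cderiv_at g z b ->
  cderiv_at (fun w => f (g w)) z (b * a)%C.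
Proof. intros Ha Hb. apply (@is_derive_comp C_AbsRing C_NormedModule); auto. apply cderiv_K; auto. Qed.

Lemma cderiv_inv (z : C) : z <> 0%C -> cderiv_at Cinv z (- / (z * z))%C.
Proof.
  intros Hz. apply ed_cderiv. intros eps Heps.
  assert (Hm : 0 < Cmod z) by (apply (proj1 (Cmod_gt_0 _)); auto).
  exists (Rmin (Cmod z / 2) (eps * (Cmod z * Cmod z * Cmod z) / 2)).
  split. { apply Rmin_pos; [lra|]. apply Rdiv_lt_0_compat; [|lra].
    apply Rmult_lt_0_compat; [lra|]. repeat apply Rmult_lt_0_compat; lra. }
  intros w Hw.
  assert (Hw1 : Cmod (w - z) < Cmod z / 2) by (eapply Rlt_le_trans; [exact Hw| apply Rmin_l]).
  assert (Hw2 : Cmod (w - z) < eps * (Cmod z * Cmod z * Cmod z) / 2)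
    by (eapply Rlt_le_trans; [exact Hw| apply Rmin_r]).
  assert (Hwm : Cmod z / 2 < Cmod w).
  { pose proof (Cmod_tri3 z w). rewrite Cmod_sym in H. lra. }
  assert (Hw0 : w <> 0%C) by (apply (proj2 (Cmod_gt_0 _)); lra).
  replace (/ w - / z - - / (z * z) * (w - z))%C with ((w - z) * (w - z) / (w * z * z))%C
    by (field; repeat split; auto).
  unfold Cdiv. rewrite !Cmod_mult, Cmod_inv, !Cmod_mult.
  2:{ apply (proj2 (Cmod_gt_0 _)). rewrite !Cmod_mult. repeat apply Rmult_lt_0_compat; lra. }
  pose proof (Cmod_ge_0 (w - z)).
  assert (0 < Cmod w * Cmod z * Cmod z) by (repeat apply Rmult_lt_0_compat; lra).
  set (a := Cmod (w - z)) in *. set (P := Cmod w * Cmod z * Cmod z) in *.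
  assert (Cmod z * Cmod z * (Cmod z / 2) <= P).
  { unfold P. assert (0 < Cmod z * Cmod z) by nra. nra. }
  assert (a <= eps * P) by nra.
  assert (a * / P <= eps).
  { apply (Rmult_le_reg_r P); auto. rewrite Rmult_assoc, Rinv_l; lra. }
  replace (a * a * / P) with (a * (a * / P)) by ring.
  rewrite (Rmult_comm eps). apply Rmult_le_compat_l; auto.
Qed.

Lemma cpow_S w n : cpow w (S n) = (w * cpow w n)%C.
Proof. reflexivity. Qed.

Lemma Cmod_cpow (w : C) n : Cmod (cpow w n) = Cmod w ^ n.
Proof. induction n; simpl. apply Cmod_1. rewrite Cmod_mult, IHn. reflexivity. Qed.

Lemma cpow_nz (w : C) n : w <> 0%C -> cpow w n <> 0%C.
Proof.
  intros Hw H. apply (f_equal Cmod) in H. rewrite Cmod_cpow, Cmod_0 in H.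
  apply (proj1 (Cmod_gt_0 _)) in Hw. apply (pow_lt _ n) in Hw. lra.
Qed.

Lemma cderiv_eq f z l l' : cderiv_at f z l -> l = l' -> cderiv_at f z l'.
Proof. intros H ->; exact H. Qed.

Lemma cderiv_cpow (f : C -> C) (z a : C) n : cderiv_at f z a ->
  cderiv_at (fun w => cpow (f w) n) z (RtoC (INR n) * cpow (f z) (pred n) * a)%C.
Proof.
  intros Ha. induction n.
  - eapply cderiv_eq; [apply (cderiv_const (RtoC 1))|]. simpl. ring.
  - eapply cderiv_eq; [apply (cderiv_mult _ _ _ _ _ Ha IHn)|].
    destruct n.
    + simpl. ring.
    + simpl pred. rewrite !S_INR, !RtoC_plus.
      change (cpow (f z) (S n)) with (f z * cpow (f z) n)%C. ring.
Qed.

Lemma mult_close (a b a' b' : C) eps : 0 < eps ->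
  Cmod (a' - a) < Rmin 1 (eps / (Cmod a + Cmod b + 1)) ->
  Cmod (b' - b) < Rmin 1 (eps / (Cmod a + Cmod b + 1)) ->
  Cmod (a' * b' - a * b) < eps.
Proof.
  intros He Ha Hb.
  set (d := Rmin 1 (eps / (Cmod a + Cmod b + 1))) in *.
  pose proof (Cmod_ge_0 a). pose proof (Cmod_ge_0 b).
  pose proof (Cmod_ge_0 (a' - a)). pose proof (Cmod_ge_0 (b' - b)).
  assert (d <= 1) by apply Rmin_l.
  assert (Hd : d * (Cmod a + Cmod b + 1) <= eps).
  { assert (d <= eps / (Cmod a + Cmod b + 1)) by apply Rmin_r.
    apply (Rmult_le_compat_r (Cmod a + Cmod b + 1)) in H4; [|lra].
    unfold Rdiv in H4. rewrite Rmult_assoc, Rinv_l in H4; lra. }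
  replace (a' * b' - a * b)%C with ((a' - a) * (b' - b) + a * (b' - b) + (a' - a) * b)%C by ring.
  eapply Rle_lt_trans. { eapply Rle_trans. apply Cmod_triangle. 
    apply Rplus_le_compat_r. apply Cmod_triangle. }
  rewrite !Cmod_mult.
  assert (Cmod (a' - a) * Cmod (b' - b) <= Cmod (a' - a)) by nra.
  assert (Cmod a * Cmod (b' - b) <= Cmod a * d) by nra.
  assert (Cmod (a' - a) * Cmod b <= d * Cmod b) by nra.
  nra.
Qed.

Lemma mult_close_d (a b : C) eps : 0 < eps -> 0 < Rmin 1 (eps / (Cmod a + Cmod b + 1)).
Proof.
  intros. pose proof (Cmod_ge_0 a). pose proof (Cmod_ge_0 b).
  apply Rmin_pos; [lra|]. apply Rdiv_lt_0_compat; lra.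
Qed.

Lemma inv_close (a a' : C) eps : 0 < eps -> a <> 0%C ->
  Cmod (a' - a) < Rmin (Cmod a / 2) (eps * (Cmod a * Cmod a) / 2) ->
  a' <> 0%C /\ Cmod (/ a' - / a) < eps.
Proof.
  intros He Ha0 H.
  assert (Hm : 0 < Cmod a) by (apply (proj1 (Cmod_gt_0 _)); auto).
  assert (H1 : Cmod (a' - a) < Cmod a / 2) by (eapply Rlt_le_trans; [exact H| apply Rmin_l]).
  assert (H2 : Cmod (a' - a) < eps * (Cmod a * Cmod a) / 2) by (eapply Rlt_le_trans; [exact H| apply Rmin_r]).
  assert (Hwm : Cmod a / 2 < Cmod a').
  { pose proof (Cmod_tri3 a a'). rewrite Cmod_sym in H0. lra. }
  assert (Hw0 : a' <> 0%C) by (apply (proj2 (Cmod_gt_0 _)); lra).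
  split; auto.
  replace (/ a' - / a)%C with ((a - a') / (a' * a))%C by (field; try split; auto).
  unfold Cdiv. rewrite Cmod_mult, Cmod_inv, Cmod_mult.
  2:{ apply (proj2 (Cmod_gt_0 _)). rewrite Cmod_mult. apply Rmult_lt_0_compat; lra. }
  rewrite Cmod_sym.
  assert (0 < Cmod a' * Cmod a) by (apply Rmult_lt_0_compat; lra).
  apply (Rmult_lt_reg_r (Cmod a' * Cmod a)); auto.
  rewrite Rmult_assoc, Rinv_l by lra. rewrite Rmult_1_r.
  assert (Cmod a / 2 * Cmod a <= Cmod a' * Cmod a) by nra.
  nra.
Qed.

Lemma inv_close_d (a : C) eps : 0 < eps -> a <> 0%C ->
  0 < Rmin (Cmod a / 2) (eps * (Cmod a * Cmod a) / 2).
Proof.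
  intros He Ha. assert (Hm : 0 < Cmod a) by (apply (proj1 (Cmod_gt_0 _)); auto).
  apply Rmin_pos; [lra|]. apply Rdiv_lt_0_compat; [|lra]. apply Rmult_lt_0_compat; nra.
Qed.

Lemma ccont_const c z : ccont (fun _ => c) z.
Proof. intros eps He. exists 1. split; [lra|]. intros. replace (c - c)%C with (RtoC 0) by ring.
  rewrite Cmod_0; lra. Qed.

Lemma ccont_id z : ccont (fun w => w) z.
Proof. intros eps He. exists eps. split; auto. Qed.

Lemma ccont_plus f g z : ccont f z -> ccont g z -> ccont (fun w => f w + g w)%C z.
Proof.
  intros Hf Hg eps He.
  destruct (Hf (eps/2)) as [d1 [Hd1 H1]]; [lra|].
  destruct (Hg (eps/2)) as [d2 [Hd2 H2]]; [lra|].
  exists (Rmin d1 d2). split; [apply Rmin_pos; auto|]. intros w Hw.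
  specialize (H1 w (Rlt_le_trans _ _ _ Hw (Rmin_l _ _))).
  specialize (H2 w (Rlt_le_trans _ _ _ Hw (Rmin_r _ _))).
  replace (f w + g w - (f z + g z))%C with ((f w - f z) + (g w - g z))%C by ring.
  eapply Rle_lt_trans; [apply Cmod_triangle|]. lra.
Qed.

Lemma ccont_mult f g z : ccont f z -> ccont g z -> ccont (fun w => f w * g w)%C z.
Proof.
  intros Hf Hg eps He.
  pose proof (mult_close_d (f z) (g z) eps He) as Hd.
  set (d := Rmin 1 (eps / (Cmod (f z) + Cmod (g z) + 1))) in *.
  destruct (Hf d Hd) as [d1 [Hd1 H1]].
  destruct (Hg d Hd) as [d2 [Hd2 H2]].
  exists (Rmin d1 d2). split; [apply Rmin_pos; auto|]. intros w Hw.
  apply mult_close; auto.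
  apply H1. eapply Rlt_le_trans; [exact Hw| apply Rmin_l].
  apply H2. eapply Rlt_le_trans; [exact Hw| apply Rmin_r].
Qed.

Lemma ccont_inv f z : ccont f z -> f z <> 0%C -> ccont (fun w => / f w)%C z.
Proof.
  intros Hf Hz eps He.
  pose proof (inv_close_d (f z) eps He Hz) as Hd.
  destruct (Hf _ Hd) as [d [Hd0 H]]. exists d. split; auto.
  intros w Hw. apply inv_close; auto.
Qed.

Lemma ccont_comp f g z : ccont f (g z) -> ccont g z -> ccont (fun w => f (g w)) z.
Proof.
  intros Hf Hg eps He. destruct (Hf eps He) as [d1 [Hd1 H1]].
  destruct (Hg d1 Hd1) as [d2 [Hd2 H2]]. exists d2. split; auto.
Qed.

Lemma ccont_cpow f z n : ccont f z -> ccont (fun w => cpow (f w) n) z.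
Proof.
  intros Hf. induction n.
  - exact (ccont_const (RtoC 1) z).
  - apply (ccont_mult f (fun w => cpow (f w) n)); auto.
Qed.

Lemma ccont_ext f g z : (forall w, f w = g w) -> ccont f z -> ccont g z.
Proof. intros E H eps He. destruct (H eps He) as [d [? Hd]]. exists d; split; auto.
  intros w; rewrite <- !E; auto. Qed.

Definition E (x : R) : C := (cos x, sin x).

Lemma Cmod_E x : Cmod (E x) = 1.
Proof. unfold Cmod, E; simpl. pose proof (sin2_cos2 x). unfold Rsqr in H.
  replace (cos x * (cos x * 1) + sin x * (sin x * 1)) with 1 by lra. apply sqrt_1. Qed.

Lemma E_add a b : E (a + b) = (E a * E b)%C.
Proof. unfold E. apply injective_projections; simpl; [rewrite cos_plus|rewrite sin_plus]; ring. Qed.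

Lemma E_0 : E 0 = RtoC 1.
Proof. unfold E. rewrite cos_0, sin_0. reflexivity. Qed.

Definition rderiv (g : R -> C) (t : R) (v : C) : Prop :=
  is_derive (fun s => fst (g s)) t (fst v) /\ is_derive (fun s => snd (g s)) t (snd v).

Definition red (g : R -> C) (t : R) (v : C) : Prop :=
  forall eps, 0 < eps -> exists d, 0 < d /\ forall s, Rabs (s - t) < d ->
    Cmod (g s - g t - RtoC (s - t) * v) <= eps * Rabs (s - t).

Lemma rderiv_red g t v : rderiv g t v -> red g t v.
Proof.
  intros [H1 H2] eps He.
  apply is_derive_Reals in H1. apply is_derive_Reals in H2.
  destruct (H1 (eps/2)) as [d1 Hd1]; [lra|].
  destruct (H2 (eps/2)) as [d2 Hd2]; [lra|].
  exists (Rmin d1 d2). split; [apply Rmin_pos; apply cond_pos|].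
  intros s Hs.
  destruct (Req_dec s t) as [->|Hne].
  { replace (g t - g t - RtoC (t - t) * v)%C with (RtoC 0).
    rewrite Cmod_0, Rminus_eq_0, Rabs_R0; lra.
    apply injective_projections; simpl; ring. }
  assert (Hh : s - t <> 0) by lra.
  assert (Ha : Rabs (s - t) < d1) by (eapply Rlt_le_trans; [exact Hs| apply Rmin_l]).
  assert (Hb : Rabs (s - t) < d2) by (eapply Rlt_le_trans; [exact Hs| apply Rmin_r]).
  specialize (Hd1 (s - t) Hh Ha). specialize (Hd2 (s - t) Hh Hb).
  replace (t + (s - t)) with s in * by ring.
  eapply Rle_trans; [apply Cmod_le_sum|]. simpl.
  assert (Hp : 0 < Rabs (s - t)) by (apply Rabs_pos_lt; auto).
  assert (forall a b, Rabs ((a - b) / (s - t) - fst v) < eps / 2 ->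
            Rabs (a - b - ((s - t) * fst v - 0 * snd v)) <= eps / 2 * Rabs (s - t)) as K1.
  { intros a b Hab. replace (a - b - ((s - t) * fst v - 0 * snd v)) with
      ((s - t) * ((a - b) / (s - t) - fst v)) by (field; auto).
    rewrite Rabs_mult. nra. }
  assert (forall a b, Rabs ((a - b) / (s - t) - snd v) < eps / 2 ->
            Rabs (a - b - ((s - t) * snd v + 0 * fst v)) <= eps / 2 * Rabs (s - t)) as K2.
  { intros a b Hab. replace (a - b - ((s - t) * snd v + 0 * fst v)) with
      ((s - t) * ((a - b) / (s - t) - snd v)) by (field; auto).
    rewrite Rabs_mult. nra. }
  specialize (K1 _ _ Hd1). specialize (K2 _ _ Hd2). 
  unfold Rminus in *. lra.
Qed.

Lemma red_rderiv g t v : red g t v -> rderiv g t v.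
Proof.
  intros H. split; apply is_derive_Reals; intros eps He;
  destruct (H (eps/2)) as [d [Hd Hs]]; try lra;
  exists (mkposreal d Hd); intros h Hh0 Hh; simpl in Hh;
  specialize (Hs (t + h)); replace (t + h - t) with h in Hs by ring;
  specialize (Hs Hh);
  assert (Hp : 0 < Rabs h) by (apply Rabs_pos_lt; auto).
  - pose proof (Cmod_fst (g (t + h)%R - g t - RtoC h * v)%C) as K. simpl in K.
    replace ((fst (g (t + h)) - fst (g t)) / h - fst v) with
      ((fst (g (t + h)) + - fst (g t) + - (h * fst v - 0 * snd v)) / h) by (field; auto).
    unfold Rdiv. rewrite Rabs_mult, Rabs_inv.
    apply (Rmult_lt_reg_r (Rabs h)); auto. rewrite Rmult_assoc, Rinv_l by lra. nra.
  - pose proof (Cmod_snd (g (t + h)%R - g t - RtoC h * v)%C) as K. simpl in K.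
    replace ((snd (g (t + h)) - snd (g t)) / h - snd v) with
      ((snd (g (t + h)) + - snd (g t) + - (h * snd v + 0 * fst v)) / h) by (field; auto).
    unfold Rdiv. rewrite Rabs_mult, Rabs_inv.
    apply (Rmult_lt_reg_r (Rabs h)); auto. rewrite Rmult_assoc, Rinv_l by lra. nra.
Qed.

Lemma red_bound g t v : red g t v -> exists d, 0 < d /\ forall s, Rabs (s - t) < d ->
  Cmod (g s - g t) <= (Cmod v + 1) * Rabs (s - t).
Proof.
  intros H. destruct (H 1 Rlt_0_1) as [d [Hd Hs]]. exists d; split; auto.
  intros s Hst. specialize (Hs s Hst).
  pose proof (Cmod_tri3 (g s - g t) (RtoC (s - t) * v)). rewrite Cmod_mult, Cmod_R in H0. lra.
Qed.

Lemma chain_red (H : C -> C) (g : R -> C) t L v :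
  cderiv_at H (g t) L -> red g t v -> red (fun s => H (g s)) t (L * v)%C.
Proof.
  intros HH Hg eps He. apply cderiv_ed in HH.
  pose proof (Cmod_ge_0 v) as Pv. pose proof (Cmod_ge_0 L) as PL.
  destruct (red_bound g t v Hg) as [d0 [Hd0 Hb]].
  destruct (HH (eps / (2 * (Cmod v + 1)))) as [d1 [Hd1 H1]].
  { apply Rdiv_lt_0_compat; lra. }
  destruct (Hg (eps / (2 * (Cmod L + 1)))) as [d2 [Hd2 H2]].
  { apply Rdiv_lt_0_compat; lra. }
  exists (Rmin d0 (Rmin d2 (d1 / (Cmod v + 1)))). split.
  { apply Rmin_pos; auto. apply Rmin_pos; auto. apply Rdiv_lt_0_compat; lra. }
  intros s Hs.
  assert (Hs0 : Rabs (s - t) < d0) by (eapply Rlt_le_trans; [exact Hs|apply Rmin_l]).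
  assert (Hs2 : Rabs (s - t) < d2) by (eapply Rlt_le_trans; [exact Hs|eapply Rle_trans; [apply Rmin_r|apply Rmin_l]]).
  assert (Hs1 : Rabs (s - t) < d1 / (Cmod v + 1)) by (eapply Rlt_le_trans; [exact Hs|eapply Rle_trans; [apply Rmin_r|apply Rmin_r]]).
  specialize (Hb s Hs0). specialize (H2 s Hs2).
  pose proof (Rabs_pos (s - t)) as Pst.
  assert (Hgs : Cmod (g s - g t) < d1).
  { apply (Rmult_lt_compat_l (Cmod v + 1)) in Hs1; [|lra].
    unfold Rdiv in Hs1. rewrite (Rmult_comm d1), <- Rmult_assoc, Rinv_r, Rmult_1_l in Hs1 by lra. lra. }
  specialize (H1 (g s) Hgs).
  replace (H (g s) - H (g t) - RtoC (s - t) * (L * v))%C with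
    ((H (g s) - H (g t) - L * (g s - g t)) + L * (g s - g t - RtoC (s - t) * v))%C by ring.
  eapply Rle_trans; [apply Cmod_triangle|]. rewrite Cmod_mult.
  assert (A1 : eps / (2 * (Cmod v + 1)) * Cmod (g s - g t) <= eps / 2 * Rabs (s - t)).
  { apply Rle_trans with (eps / (2 * (Cmod v + 1)) * ((Cmod v + 1) * Rabs (s - t))).
    apply Rmult_le_compat_l; auto. apply Rlt_le, Rdiv_lt_0_compat; lra.
    right. field. lra. }
  assert (A2 : Cmod L * (eps / (2 * (Cmod L + 1)) * Rabs (s - t)) <= eps / 2 * Rabs (s - t)).
  { rewrite <- Rmult_assoc. apply Rmult_le_compat_r; auto.
    apply Rle_trans with ((Cmod L + 1) * (eps / (2 * (Cmod L + 1)))).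
    apply Rmult_le_compat_r. apply Rlt_le, Rdiv_lt_0_compat; lra. lra.
    right. field. lra. }
  assert (Cmod L * Cmod (g s - g t - RtoC (s - t) * v) <= Cmod L * (eps / (2 * (Cmod L + 1)) * Rabs (s - t))).
  { apply Rmult_le_compat_l; auto. }
  lra.
Qed.

Lemma chain_rderiv (H : C -> C) (g : R -> C) t L v :
  cderiv_at H (g t) L -> rderiv g t v -> rderiv (fun s => H (g s)) t (L * v)%C.
Proof. intros. apply red_rderiv, chain_red; auto. apply rderiv_red; auto. Qed.

Lemma rderiv_eq g t v v' : rderiv g t v -> v = v' -> rderiv g t v'.
Proof. intros H ->; auto. Qed.

Lemma rderiv_ext g h t v : (forall s, g s = h s) -> rderiv g t v -> rderiv h t v.
Proof.
  intros E0 [H1 H2]. split.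
  apply (is_derive_ext (fun s => fst (g s))); auto. intros; rewrite E0; auto.
  apply (is_derive_ext (fun s => snd (g s))); auto. intros; rewrite E0; auto.
Qed.

Lemma is_derive_eqv (f : R -> R) x l l' : is_derive f x l -> l = l' -> is_derive f x l'.
Proof. intros H ->; auto. Qed.

Lemma rderiv_mult g h t a b : rderiv g t a -> rderiv h t b ->
  rderiv (fun s => g s * h s)%C t (a * h t + g t * b)%C.
Proof.
  intros [G1 G2] [H1 H2]. split; simpl.
  - pose proof (is_derive_minus _ _ t _ _ (Derive.is_derive_mult _ _ t _ _ G1 H1)
        (Derive.is_derive_mult _ _ t _ _ G2 H2)) as K.
    eapply is_derive_eqv; [eapply is_derive_ext; [|exact K]; intros; reflexivity|].
    unfold minus, plus, opp; simpl. ring.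
  - pose proof (is_derive_plus _ _ t _ _ (Derive.is_derive_mult _ _ t _ _ G1 H2)
        (Derive.is_derive_mult _ _ t _ _ G2 H1)) as K.
    eapply is_derive_eqv; [eapply is_derive_ext; [|exact K]; intros; reflexivity|].
    unfold minus, plus, opp; simpl. ring.
Qed.

Lemma rderiv_plus g h t a b : rderiv g t a -> rderiv h t b ->
  rderiv (fun s => g s + h s)%C t (a + b)%C.
Proof.
  intros [G1 G2] [H1 H2]. split; simpl.
  - apply (is_derive_plus (fun s => fst (g s)) (fun s => fst (h s))); auto.
  - apply (is_derive_plus (fun s => snd (g s)) (fun s => snd (h s))); auto.
Qed.

Lemma rderiv_const (c : C) t : rderiv (fun _ => c) t (RtoC 0).
Proof. split; simpl; [exact (is_derive_const (fst c) t)|exact (is_derive_const (snd c) t)]. Qed.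

Lemma rderiv_E k x : rderiv (fun s => E (k * s)) x (RtoC k * Ci * E (k * x))%C.
Proof.
  split; unfold E; simpl.
  - auto_derive; auto. ring.
  - auto_derive; auto. ring.
Qed.

Lemma rderiv_lin (w e : C) u : rderiv (fun s => w + RtoC s * e)%C u e.
Proof.
  split; simpl.
  - auto_derive; auto. ring.
  - auto_derive; auto. ring.
Qed.

Lemma contpt_ed (f : R -> R) x :
  (forall eps, 0 < eps -> exists d, 0 < d /\ forall y, Rabs (y - x) < d -> Rabs (f y - f x) < eps) ->
  continuity_pt f x.
Proof.
  intros H eps He. destruct (H eps He) as [d [Hd Hy]]. exists d; split; auto.
  intros y [_ Hy2]. apply Hy. exact Hy2.
Qed.

Lemma contpt_ed' (f : R -> R) x : continuity_pt f x ->
  forall eps, 0 < eps -> exists d, 0 < d /\ forall y, Rabs (y - x) < d -> Rabs (f y - f x) < eps.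
Proof.
  intros H eps He. destruct (H eps He) as [d [Hd Hy]]. exists d; split; auto.
  intros y Hyx. destruct (Req_dec y x) as [->|Hne].
  - rewrite Rminus_eq_0, Rabs_R0; auto.
  - apply (Hy y). split; [split; [exact I| auto]|exact Hyx].
Qed.

Definition rcont (g : R -> C) (t : R) : Prop :=
  forall eps, 0 < eps -> exists d, 0 < d /\ forall s, Rabs (s - t) < d -> Cmod (g s - g t) < eps.

Lemma rcont_fst g t : rcont g t -> continuous (fun s => fst (g s)) t.
Proof.
  intros H. apply continuity_pt_filterlim. apply contpt_ed.
  intros eps He. destruct (H eps He) as [d [Hd Hs]]. exists d; split; auto.
  intros y Hy. eapply Rle_lt_trans; [|apply (Hs y Hy)].
  eapply Rle_trans; [|apply (Cmod_fst (g y - g t))]. simpl. right. reflexivity.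
Qed.

Lemma rcont_snd g t : rcont g t -> continuous (fun s => snd (g s)) t.
Proof.
  intros H. apply continuity_pt_filterlim. apply contpt_ed.
  intros eps He. destruct (H eps He) as [d [Hd Hs]]. exists d; split; auto.
  intros y Hy. eapply Rle_lt_trans; [|apply (Hs y Hy)].
  eapply Rle_trans; [|apply (Cmod_snd (g y - g t))]. simpl. right. reflexivity.
Qed.

Lemma rcont_Cmod g t : rcont g t -> continuity_pt (fun s => Cmod (g s)) t.
Proof.
  intros H. apply contpt_ed.
  intros eps He. destruct (H eps He) as [d [Hd Hs]]. exists d; split; auto.
  intros y Hy. specialize (Hs y Hy).
  pose proof (Cmod_tri3 (g y) (g t)). pose proof (Cmod_tri3 (g t) (g y)).
  rewrite Cmod_sym in H1. apply Rabs_def1; lra.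
Qed.

Lemma red_rcont g t v : red g t v -> rcont g t.
Proof.
  intros H eps He. destruct (red_bound g t v H) as [d [Hd Hb]].
  pose proof (Cmod_ge_0 v).
  exists (Rmin d (eps / (Cmod v + 1))). split.
  { apply Rmin_pos; auto. apply Rdiv_lt_0_compat; lra. }
  intros s Hs. eapply Rle_lt_trans; [apply Hb; eapply Rlt_le_trans; [exact Hs|apply Rmin_l]|].
  assert (Rabs (s - t) < eps / (Cmod v + 1)) by (eapply Rlt_le_trans; [exact Hs|apply Rmin_r]).
  apply (Rmult_lt_compat_l (Cmod v + 1)) in H1; [|lra].
  unfold Rdiv in H1. rewrite (Rmult_comm eps), <- Rmult_assoc, Rinv_r, Rmult_1_l in H1 by lra. lra.
Qed.

Lemma rderiv_rcont g t v : rderiv g t v -> rcont g t.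
Proof. intros; eapply red_rcont, rderiv_red; eauto. Qed.

Lemma rcont_comp (H : C -> C) (g : R -> C) t : ccont H (g t) -> rcont g t -> rcont (fun s => H (g s)) t.
Proof.
  intros HH Hg eps He. destruct (HH eps He) as [d1 [Hd1 H1]].
  destruct (Hg d1 Hd1) as [d2 [Hd2 H2]]. exists d2. split; auto.
Qed.

Lemma rcont_mult g h t : rcont g t -> rcont h t -> rcont (fun s => g s * h s)%C t.
Proof.
  intros Hf Hg eps He.
  pose proof (mult_close_d (g t) (h t) eps He) as Hd.
  destruct (Hf _ Hd) as [d1 [Hd1 H1]].
  destruct (Hg _ Hd) as [d2 [Hd2 H2]].
  exists (Rmin d1 d2). split; [apply Rmin_pos; auto|]. intros w Hw.
  apply mult_close; auto.
  apply H1. eapply Rlt_le_trans; [exact Hw| apply Rmin_l].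
  apply H2. eapply Rlt_le_trans; [exact Hw| apply Rmin_r].
Qed.

Lemma rcont_ext g h t : (forall s, g s = h s) -> rcont g t -> rcont h t.
Proof. intros E0 H eps He. destruct (H eps He) as [d [? Hd]]. exists d; split; auto.
  intros w; rewrite <- !E0; auto. Qed.

Definition c2 (h : R -> R -> C) (u v : R) : Prop :=
  forall eps, 0 < eps -> exists d, 0 < d /\ forall u' v', Rabs (u' - u) < d -> Rabs (v' - v) < d ->
    Cmod (h u' v' - h u v) < eps.

Lemma c2_fst h u v : c2 h u v -> continuity_2d_pt (fun a b => fst (h a b)) u v.
Proof.
  intros H [eps He]. destruct (H eps He) as [d [Hd Hs]]. exists (mkposreal d Hd).
  intros a b Ha Hb. simpl in *. eapply Rle_lt_trans; [|apply (Hs a b Ha Hb)].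
  eapply Rle_trans; [|apply (Cmod_fst (h a b - h u v))]. simpl. right. reflexivity.
Qed.

Lemma c2_snd h u v : c2 h u v -> continuity_2d_pt (fun a b => snd (h a b)) u v.
Proof.
  intros H [eps He]. destruct (H eps He) as [d [Hd Hs]]. exists (mkposreal d Hd).
  intros a b Ha Hb. simpl in *. eapply Rle_lt_trans; [|apply (Hs a b Ha Hb)].
  eapply Rle_trans; [|apply (Cmod_snd (h a b - h u v))]. simpl. right. reflexivity.
Qed.

Lemma c2_comp (H : C -> C) h u v : ccont H (h u v) -> c2 h u v -> c2 (fun a b => H (h a b)) u v.
Proof.
  intros HH Hg eps He. destruct (HH eps He) as [d1 [Hd1 H1]].
  destruct (Hg d1 Hd1) as [d2 [Hd2 H2]]. exists d2. split; auto.
Qed.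

Lemma c2_mult g h u v : c2 g u v -> c2 h u v -> c2 (fun a b => g a b * h a b)%C u v.
Proof.
  intros Hf Hg eps He.
  pose proof (mult_close_d (g u v) (h u v) eps He) as Hd.
  destruct (Hf _ Hd) as [d1 [Hd1 H1]].
  destruct (Hg _ Hd) as [d2 [Hd2 H2]].
  exists (Rmin d1 d2). split; [apply Rmin_pos; auto|]. intros a b Ha Hb.
  apply mult_close; auto.
  apply H1; [apply (Rlt_le_trans _ _ _ Ha (Rmin_l _ _))|apply (Rlt_le_trans _ _ _ Hb (Rmin_l _ _))].
  apply H2; [apply (Rlt_le_trans _ _ _ Ha (Rmin_r _ _))|apply (Rlt_le_trans _ _ _ Hb (Rmin_r _ _))].
Qed.

Lemma c2_plus g h u v : c2 g u v -> c2 h u v -> c2 (fun a b => g a b + h a b)%C u v.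
Proof.
  intros Hf Hg eps He.
  destruct (Hf (eps/2)) as [d1 [Hd1 H1]]; [lra|].
  destruct (Hg (eps/2)) as [d2 [Hd2 H2]]; [lra|].
  exists (Rmin d1 d2). split; [apply Rmin_pos; auto|]. intros a b Ha Hb.
  specialize (H1 a b (Rlt_le_trans _ _ _ Ha (Rmin_l _ _)) (Rlt_le_trans _ _ _ Hb (Rmin_l _ _))).
  specialize (H2 a b (Rlt_le_trans _ _ _ Ha (Rmin_r _ _)) (Rlt_le_trans _ _ _ Hb (Rmin_r _ _))).
  replace (g a b + h a b - (g u v + h u v))%C with ((g a b - g u v) + (h a b - h u v))%C by ring.
  eapply Rle_lt_trans; [apply Cmod_triangle|]. lra.
Qed.

Lemma c2_const (c : C) u v : c2 (fun _ _ => c) u v.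
Proof. intros eps He. exists 1. split; [lra|]. intros. replace (c - c)%C with (RtoC 0) by ring.
  rewrite Cmod_0; lra. Qed.

Lemma c2_fstvar u v : c2 (fun a _ => RtoC a) u v.
Proof. intros eps He. exists eps. split; auto. intros a b Ha _.
  replace (RtoC a - RtoC u)%C with (RtoC (a - u)) by (apply injective_projections; simpl; ring).
  rewrite Cmod_R. auto. Qed.

Lemma c2_E k u v : c2 (fun _ b => E (k * b)) u v.
Proof.
  intros eps He.
  destruct (contpt_ed' cos (k * v) (continuity_cos _) (eps / 2)) as [d1 [Hd1 H1]]; [lra|].
  destruct (contpt_ed' sin (k * v) (continuity_sin _) (eps / 2)) as [d2 [Hd2 H2]]; [lra|].
  exists (Rmin d1 d2 / (Rabs k + 1)). split.
  { apply Rdiv_lt_0_compat. apply Rmin_pos; auto. pose proof (Rabs_pos k); lra. }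
  intros a b _ Hb. 
  assert (Hk : Rabs (k * b - k * v) < Rmin d1 d2).
  { replace (k * b - k * v) with (k * (b - v)) by ring. rewrite Rabs_mult.
    pose proof (Rabs_pos k). pose proof (Rabs_pos (b - v)).
    apply (Rmult_lt_compat_l (Rabs k + 1)) in Hb; [|lra].
    unfold Rdiv in Hb. rewrite (Rmult_comm (Rmin d1 d2)), <- Rmult_assoc, Rinv_r, Rmult_1_l in Hb by lra. nra. }
  specialize (H1 (k * b) (Rlt_le_trans _ _ _ Hk (Rmin_l _ _))).
  specialize (H2 (k * b) (Rlt_le_trans _ _ _ Hk (Rmin_r _ _))).
  eapply Rle_lt_trans; [apply Cmod_le_sum|]. unfold E; simpl. unfold Rminus in *. lra.
Qed.

Lemma rcont_E k x : rcont (fun s => E (k * s)) x.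
Proof. eapply rderiv_rcont, rderiv_E. Qed.

Lemma rcont_const (c : C) t : rcont (fun _ => c) t.
Proof. intros eps He; exists 1; split; [lra|]; intros; replace (c - c)%C with (RtoC 0) by ring;
  rewrite Cmod_0; lra. Qed.

Lemma rcont_plus g h t : rcont g t -> rcont h t -> rcont (fun s => g s + h s)%C t.
Proof.
  intros Hf Hg eps He.
  destruct (Hf (eps/2)) as [d1 [Hd1 H1]]; [lra|].
  destruct (Hg (eps/2)) as [d2 [Hd2 H2]]; [lra|].
  exists (Rmin d1 d2). split; [apply Rmin_pos; auto|]. intros w Hw.
  specialize (H1 w (Rlt_le_trans _ _ _ Hw (Rmin_l _ _))).
  specialize (H2 w (Rlt_le_trans _ _ _ Hw (Rmin_r _ _))).
  replace (g w + h w - (g t + h t))%C with ((g w - g t) + (h w - h t))%C by ring.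
  eapply Rle_lt_trans; [apply Cmod_triangle|]. lra.
Qed.

Definition cRI (f : R -> C) (a b : R) : C :=
  (RInt (fun x => fst (f x)) a b, RInt (fun x => snd (f x)) a b).

Lemma cRI_ext f g a b : (forall x, Rmin a b < x < Rmax a b -> f x = g x) -> cRI f a b = cRI g a b.
Proof.
  intros H. unfold cRI. f_equal; apply RInt_ext; intros; rewrite H; auto.
Qed.

Lemma param_real (F F' : R -> R -> C) a b t0 eta :
  0 < eta ->
  (forall t th, Rabs (t - t0) < eta -> rderiv (fun u => F u th) t (F' t th)) ->
  (forall th, c2 F' t0 th) ->
  (forall t th, Rabs (t - t0) < eta -> rcont (F t) th) ->
  rderiv (fun t => cRI (F t) a b) t0 (cRI (F' t0) a b).
Proof.
  intros Heta Hd Hc Hr.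
  assert (Hloc : forall P : R -> Prop, (forall y, Rabs (y - t0) < eta -> P y) -> locally t0 P).
  { intros P HP. exists (mkposreal eta Heta). intros y Hy. apply HP. exact Hy. }
  split; simpl.
  - eapply is_derive_eqv.
    + apply (is_derive_RInt_param (fun u th => fst (F u th))).
      * apply Hloc. intros y Hy th _. exists (fst (F' y th)). apply (Hd y th Hy).
      * intros th _. apply continuity_2d_pt_ext_loc with (fun u v => fst (F' u v)).
        { exists (mkposreal eta Heta). intros u v Hu _. simpl in Hu.
          symmetry. apply is_derive_unique. apply (Hd u v Hu). }
        apply c2_fst, Hc.
      * apply Hloc. intros y Hy. apply (@ex_RInt_continuous R_CompleteNormedModule). intros z _. apply rcont_fst, Hr; auto.
    + apply RInt_ext. intros x _. apply is_derive_unique. apply Hd. rewrite Rminus_eq_0, Rabs_R0; auto.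
  - eapply is_derive_eqv.
    + apply (is_derive_RInt_param (fun u th => snd (F u th))).
      * apply Hloc. intros y Hy th _. exists (snd (F' y th)). apply (Hd y th Hy).
      * intros th _. apply continuity_2d_pt_ext_loc with (fun u v => snd (F' u v)).
        { exists (mkposreal eta Heta). intros u v Hu _. simpl in Hu.
          symmetry. apply is_derive_unique. apply (Hd u v Hu). }
        apply c2_snd, Hc.
      * apply Hloc. intros y Hy. apply (@ex_RInt_continuous R_CompleteNormedModule). intros z _. apply rcont_snd, Hr; auto.
    + apply RInt_ext. intros x _. apply is_derive_unique. apply Hd. rewrite Rminus_eq_0, Rabs_R0; auto.
Qed.

Lemma integrand_rderiv (H H' : C -> C) (w : C) k th u :
  cderiv_at H (w + RtoC u * E th)%C (H' (w + RtoC u * E th)%C) ->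
  rderiv (fun u => E (k * th) * H (w + RtoC u * E th))%C u
         (E (k * th) * E th * H' (w + RtoC u * E th))%C.
Proof.
  intros Hd. eapply rderiv_eq.
  - apply rderiv_mult. apply rderiv_const.
    apply (chain_rderiv H (fun u => w + RtoC u * E th)%C). exact Hd. apply rderiv_lin.
  - cbv beta. ring.
Qed.

Lemma c2_ext g h u v : (forall a b, g a b = h a b) -> c2 g u v -> c2 h u v.
Proof. intros E0 H eps He. destruct (H eps He) as [d [? Hd]]. exists d; split; auto.
  intros a b; rewrite <- !E0; auto. Qed.

Lemma c2_circ (w : C) u v : c2 (fun a b => w + RtoC a * E b)%C u v.
Proof.
  apply c2_plus. apply c2_const. apply c2_mult. apply c2_fstvar.
  apply (c2_ext (fun _ b => E (1 * b))). intros; rewrite Rmult_1_l; auto. apply c2_E.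
Qed.

Lemma rcont_circ (w : C) t x : rcont (fun b => w + RtoC t * E b)%C x.
Proof.
  eapply rderiv_rcont. eapply rderiv_plus. apply rderiv_const.
  apply rderiv_mult. apply rderiv_const.
  apply (rderiv_ext (fun s => E (1 * s))). intros; rewrite Rmult_1_l; auto. apply rderiv_E.
Qed.

Lemma param_cx (H H' : C -> C) (w : C) k a b t0 eta :
  0 < eta ->
  (forall t th, Rabs (t - t0) < eta ->
     cderiv_at H (w + RtoC t * E th)%C (H' (w + RtoC t * E th)%C) /\
     ccont H' (w + RtoC t * E th)%C) ->
  rderiv (fun t => cRI (fun th => E (k * th) * H (w + RtoC t * E th))%C a b) t0
         (cRI (fun th => E (k * th) * E th * H' (w + RtoC t0 * E th))%C a b).
Proof.
  intros Heta Hyp.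
  apply (param_real (fun t th => E (k * th) * H (w + RtoC t * E th))%C
                    (fun t th => E (k * th) * E th * H' (w + RtoC t * E th))%C a b t0 eta Heta).
  - intros t th Ht. apply integrand_rderiv. apply Hyp; auto.
  - intros th. apply c2_mult. apply c2_mult. apply c2_E.
    apply (c2_ext (fun _ b => E (1 * b))). intros; rewrite Rmult_1_l; auto. apply c2_E.
    apply (c2_comp H' (fun a b => w + RtoC a * E b)%C). 
    apply Hyp. rewrite Rminus_eq_0, Rabs_R0; auto. apply c2_circ.
  - intros t th Ht. apply rcont_mult. apply rcont_E.
    apply (rcont_comp H (fun b => w + RtoC t * E b)%C).
    eapply cderiv_ccont. apply Hyp; auto. apply rcont_circ.
Qed.

Definition rcont_on (f : R -> C) a b := forall x, Rmin a b <= x <= Rmax a b -> rcont f x.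

Lemma exRI_fst f a b : rcont_on f a b -> ex_RInt (fun x => fst (f x)) a b.
Proof. intros H. apply (@ex_RInt_continuous R_CompleteNormedModule). intros; apply rcont_fst, H; auto. Qed.
Lemma exRI_snd f a b : rcont_on f a b -> ex_RInt (fun x => snd (f x)) a b.
Proof. intros H. apply (@ex_RInt_continuous R_CompleteNormedModule). intros; apply rcont_snd, H; auto. Qed.

Lemma cRI_FTC (f f' : R -> C) a b :
  (forall x, Rmin a b <= x <= Rmax a b -> rderiv f x (f' x)) ->
  rcont_on f' a b -> cRI f' a b = (f b - f a)%C.
Proof.
  intros Hd Hc. unfold cRI. apply injective_projections; simpl.
  - apply (@is_RInt_unique R_CompleteNormedModule).
    apply (@is_RInt_derive R_CompleteNormedModule (fun x => fst (f x))).
    intros; apply Hd; auto. intros; apply rcont_fst, Hc; auto.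
  - apply (@is_RInt_unique R_CompleteNormedModule).
    apply (@is_RInt_derive R_CompleteNormedModule (fun x => snd (f x))).
    intros; apply Hd; auto. intros; apply rcont_snd, Hc; auto.
Qed.

Lemma cRI_plus f g a b : rcont_on f a b -> rcont_on g a b ->
  cRI (fun x => f x + g x)%C a b = (cRI f a b + cRI g a b)%C.
Proof.
  intros Hf Hg. unfold cRI. apply injective_projections; simpl.
  - rewrite <- (@RInt_plus R_CompleteNormedModule); [reflexivity| apply exRI_fst; auto | apply exRI_fst; auto].
  - rewrite <- (@RInt_plus R_CompleteNormedModule); [reflexivity| apply exRI_snd; auto | apply exRI_snd; auto].
Qed.

Lemma cRI_scal (c : C) f a b : rcont_on f a b ->
  cRI (fun x => c * f x)%C a b = (c * cRI f a b)%C.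
Proof.
  intros Hf. unfold cRI. pose proof (exRI_fst f a b Hf). pose proof (exRI_snd f a b Hf).
  apply injective_projections; simpl.
  - rewrite <- (@RInt_scal R_CompleteNormedModule _ _ _ (fst c)) by auto.
    rewrite <- (@RInt_scal R_CompleteNormedModule _ _ _ (snd c)) by auto.
    rewrite <- (@RInt_minus R_CompleteNormedModule).
    + apply RInt_ext. intros; reflexivity.
    + apply (@ex_RInt_scal R_CompleteNormedModule); auto.
    + apply (@ex_RInt_scal R_CompleteNormedModule); auto.
  - rewrite <- (@RInt_scal R_CompleteNormedModule _ _ _ (fst c)) by auto.
    rewrite <- (@RInt_scal R_CompleteNormedModule _ _ _ (snd c)) by auto.
    rewrite <- (@RInt_plus R_CompleteNormedModule).
    + apply RInt_ext. intros; reflexivity.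
    + apply (@ex_RInt_scal R_CompleteNormedModule); auto.
    + apply (@ex_RInt_scal R_CompleteNormedModule); auto.
Qed.

Lemma cRI_const (c : C) a b : cRI (fun _ => c) a b = (RtoC (b - a) * c)%C.
Proof.
  unfold cRI. rewrite !(@RInt_const R_CompleteNormedModule). 
  apply injective_projections; simpl; unfold scal; simpl; unfold mult; simpl; ring.
Qed.

Lemma CS_ineq (a b c d : R) : a * c + b * d <= sqrt (a*a + b*b) * sqrt (c*c + d*d).
Proof.
  assert (Ha : 0 <= a*a + b*b) by (pose proof (Rle_0_sqr a); pose proof (Rle_0_sqr b); unfold Rsqr in *; lra).
  assert (Hc : 0 <= c*c + d*d) by (pose proof (Rle_0_sqr c); pose proof (Rle_0_sqr d); unfold Rsqr in *; lra).
  rewrite <- sqrt_mult_alt by exact Ha.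
  destruct (Rle_or_lt (a * c + b * d) 0). { pose proof (sqrt_pos ((a*a+b*b)*(c*c+d*d))). lra. }
  apply Rsqr_incr_0_var. rewrite Rsqr_sqrt. unfold Rsqr.
  pose proof (Rle_0_sqr (a*d - b*c)). unfold Rsqr in *.
  replace ((a*a+b*b)*(c*c+d*d)) with ((a*c+b*d)*(a*c+b*d) + (a*d-b*c)*(a*d-b*c)) by ring. lra.
  apply Rmult_le_pos; auto.
  apply sqrt_pos.
Qed.

Lemma cRI_bound (f : R -> C) a b B : a <= b -> rcont_on f a b ->
  (forall x, a <= x <= b -> Cmod (f x) <= B) -> Cmod (cRI f a b) <= (b - a) * B.
Proof.
  intros Hab Hf HB.
  set (v := cRI f a b).
  pose proof (exRI_fst f a b Hf) as E1. pose proof (exRI_snd f a b Hf) as E2.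
  assert (Hv : Cmod v * Cmod v = RInt (fun x => fst v * fst (f x) + snd v * snd (f x)) a b).
  { rewrite (@RInt_plus R_CompleteNormedModule (fun x => fst v * fst (f x)) (fun x => snd v * snd (f x))).
    - assert (S1 : RInt (fun x => fst v * fst (f x)) a b = fst v * RInt (fun x => fst (f x)) a b)
        by (exact (@RInt_scal R_CompleteNormedModule (fun x => fst (f x)) a b (fst v) E1)).
      assert (S2 : RInt (fun x => snd v * snd (f x)) a b = snd v * RInt (fun x => snd (f x)) a b)
        by (exact (@RInt_scal R_CompleteNormedModule (fun x => snd (f x)) a b (snd v) E2)).
      change (Cmod v * Cmod v = RInt (fun x => fst v * fst (f x)) a b + RInt (fun x => snd v * snd (f x)) a b).
      rewrite S1, S2.
      unfold v, cRI; simpl. unfold Cmod; simpl. rewrite sqrt_sqrt. ring.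
      pose proof (Rle_0_sqr (RInt (fun x : R => fst (f x)) a b)).
      pose proof (Rle_0_sqr (RInt (fun x : R => snd (f x)) a b)). unfold Rsqr in *. lra.
    - apply (@ex_RInt_scal R_CompleteNormedModule); auto.
    - apply (@ex_RInt_scal R_CompleteNormedModule); auto. }
  assert (Hle : RInt (fun x => fst v * fst (f x) + snd v * snd (f x)) a b <= RInt (fun _ => Cmod v * B) a b).
  { apply RInt_le; auto.
    - apply (@ex_RInt_plus R_CompleteNormedModule); apply (@ex_RInt_scal R_CompleteNormedModule); auto.
    - apply (@ex_RInt_const R_CompleteNormedModule).
    - intros x Hx. specialize (HB x (conj (Rlt_le _ _ (proj1 Hx)) (Rlt_le _ _ (proj2 Hx)))).
      eapply Rle_trans. apply CS_ineq.
      assert (K1 : Cmod v = sqrt (fst v * fst v + snd v * snd v)) by (unfold Cmod; f_equal; ring).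
      assert (K2 : Cmod (f x) = sqrt (fst (f x) * fst (f x) + snd (f x) * snd (f x))) by (unfold Cmod; f_equal; ring).
      rewrite <- K1, <- K2.
      apply Rmult_le_compat_l; auto. apply Cmod_ge_0. }
  assert (Hk : RInt (fun _ => Cmod v * B) a b = (b - a) * (Cmod v * B))
    by (rewrite (@RInt_const R_CompleteNormedModule); reflexivity).
  rewrite Hk, <- Hv in Hle. pose proof (Cmod_ge_0 v).
  destruct (Req_dec (Cmod v) 0) as [H0|H0]. 
  - rewrite H0. assert (0 <= B). { assert (Cmod (f a) <= B) by (apply HB; lra). pose proof (Cmod_ge_0 (f a)). lra. } nra.
  - assert (0 < Cmod v) by lra. 
    apply (Rmult_le_reg_l (Cmod v)); auto. nra.
Qed.

Definition tower (g : nat -> C -> C) : Prop :=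
  forall k z, in_disk z -> cderiv_at (g k) z (g (S k) z).

Lemma Cmod_circ t th : Cmod (RtoC 0 + RtoC t * E th)%C = Rabs t.
Proof.
  replace (RtoC 0 + RtoC t * E th)%C with (RtoC t * E th)%C by ring.
  rewrite Cmod_mult, Cmod_E, Cmod_R. ring.
Qed.

Lemma sin_nat_PI n : sin (INR n * PI) = 0.
Proof. apply sin_eq_0_1. exists (Z.of_nat n). rewrite INR_IZR_INZ. reflexivity. Qed.

Lemma E_negPI : E (- PI) = E PI.
Proof. unfold E. rewrite cos_neg, sin_neg, sin_PI. f_equal. ring. Qed.

Lemma E_intPI (j m : nat) : E ((INR j - INR m) * PI) = E ((INR j - INR m) * - PI).
Proof.
  unfold E. f_equal.
  - replace ((INR j - INR m) * - PI) with (- ((INR j - INR m) * PI)) by ring. rewrite cos_neg; auto.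
  - replace ((INR j - INR m) * - PI) with (INR m * PI - INR j * PI) by ring.
    replace ((INR j - INR m) * PI) with (INR j * PI - INR m * PI) by ring.
    rewrite !sin_minus, !sin_nat_PI. ring.
Qed.

Definition Phi (g : nat -> C -> C) (m j : nat) (t : R) : C :=
  cRI (fun th => E ((INR j - INR m) * th) * g j (RtoC 0 + RtoC t * E th))%C (- PI) PI.

Lemma tower_ccont g k z : tower g -> in_disk z -> ccont (g k) z.
Proof. intros Hg Hz. eapply cderiv_ccont, Hg, Hz. Qed.

Lemma integ_rcont g (k : R) j t : tower g -> Rabs t < 1 ->
  rcont_on (fun th => E (k * th) * g j (RtoC 0 + RtoC t * E th))%C (- PI) PI.
Proof.
  intros Hg Ht x _. apply rcont_mult. apply rcont_E.
  apply (rcont_comp (g j) (fun b => RtoC 0 + RtoC t * E b)%C).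
  apply tower_ccont; auto. unfold in_disk. rewrite Cmod_circ; auto. apply rcont_circ.
Qed.

Lemma Phi_deriv g m j t : tower g -> Rabs t < 1 -> rderiv (Phi g m j) t (Phi g m (S j) t).
Proof.
  intros Hg Ht. eapply rderiv_eq.
  - apply (param_cx (g j) (g (S j)) (RtoC 0) (INR j - INR m) (- PI) PI t (1 - Rabs t)).
    + lra.
    + intros t' th Ht'. assert (Hd : in_disk (RtoC 0 + RtoC t' * E th)%C).
      { unfold in_disk. rewrite Cmod_circ. pose proof (Rabs_triang_inv t' t). 
        pose proof (Rabs_triang (t' - t) t). replace (t' - t + t) with t' in H0 by ring. lra. }
      split. apply Hg; auto. apply tower_ccont; auto.
  - unfold Phi. apply cRI_ext. intros x _. rewrite <- E_add, S_INR. f_equal. f_equal. ring.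
Qed.

Lemma rderiv_path t th : rderiv (fun s => RtoC 0 + RtoC t * E s)%C th (RtoC t * (RtoC 1 * Ci * E (1 * th)))%C.
Proof.
  eapply rderiv_eq. eapply rderiv_plus. apply rderiv_const.
  apply rderiv_mult. apply rderiv_const.
  apply (rderiv_ext (fun s => E (1 * s))). intros; rewrite Rmult_1_l; auto. apply rderiv_E.
  rewrite Rmult_1_l. ring.
Qed.

Lemma Phi_rel g m t : tower g -> 0 < t < 1 ->
  (RtoC t * Phi g m 1 t)%C = (RtoC (INR m) * Phi g m 0 t)%C.
Proof.
  intros Hg Ht.
  set (k0 := INR 0 - INR m).
  set (p := fun s => (RtoC 0 + RtoC t * E s)%C).
  set (q := fun s => (E (k0 * s) * g 0%nat (p s))%C).
  set (q' := fun s => (Ci * (RtoC k0 * (E (k0 * s) * g 0%nat (p s)) +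
                             RtoC t * (E (k0 * s) * E s * g 1%nat (p s))))%C).
  assert (Hat : Rabs t < 1) by (rewrite Rabs_pos_eq; lra).
  assert (Hp : forall s, in_disk (p s)) by (intros s; unfold in_disk, p; rewrite Cmod_circ; auto).
  assert (Hq : forall s, rderiv q s (q' s)).
  { intros s. eapply rderiv_eq. apply rderiv_mult. apply rderiv_E.
    apply (chain_rderiv (g 0%nat) p). apply Hg, Hp. apply rderiv_path.
    unfold q', p. rewrite Rmult_1_l. ring. }
  assert (Hc1 : rcont_on (fun s => E (k0 * s) * g 0%nat (p s))%C (- PI) PI).
  { apply integ_rcont; auto. }
  assert (Hc2 : rcont_on (fun s => E (k0 * s) * E s * g 1%nat (p s))%C (- PI) PI).
  { intros x Hx. apply rcont_mult. apply rcont_mult. apply rcont_E.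
    apply (rcont_ext (fun s => E (1 * s))). intros; rewrite Rmult_1_l; auto. apply rcont_E.
    apply (rcont_comp (g 1%nat) p). apply tower_ccont; auto. apply rcont_circ. }
  assert (HF : cRI q' (- PI) PI = (q PI - q (- PI)%R)%C).
  { apply cRI_FTC. intros; apply Hq.
    intros x Hx. apply rcont_mult. apply rcont_const.
    apply rcont_plus; apply rcont_mult; try apply rcont_const; auto. }
  assert (Hq0 : (q PI - q (- PI)%R)%C = RtoC 0).
  { unfold q, p. rewrite E_negPI. unfold k0. rewrite E_intPI. ring. }
  rewrite Hq0 in HF. unfold q' in HF.
  rewrite cRI_scal, cRI_plus, !cRI_scal in HF;
  try (intros x Hx; repeat first [apply Hc1; assumption | apply Hc2; assumption | apply rcont_plus | apply rcont_mult | apply rcont_const]).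
  assert (E1 : cRI (fun s => E (k0 * s) * E s * g 1%nat (p s))%C (- PI) PI = Phi g m 1 t).
  { unfold Phi. apply cRI_ext. intros x _. unfold p, k0. rewrite <- E_add. f_equal. f_equal.
    simpl. ring. }
  assert (E0 : cRI (fun s => E (k0 * s) * g 0%nat (p s))%C (- PI) PI = Phi g m 0 t) by reflexivity.
  rewrite E1, E0 in HF.
  assert (HF' : (RtoC k0 * Phi g m 0 t + RtoC t * Phi g m 1 t)%C = RtoC 0).
  { replace (RtoC k0 * Phi g m 0 t + RtoC t * Phi g m 1 t)%C with
      ((- Ci) * (Ci * (RtoC k0 * Phi g m 0 t + RtoC t * Phi g m 1 t)))%C.
    rewrite HF. ring.
    replace ((- Ci) * (Ci * (RtoC k0 * Phi g m 0 t + RtoC t * Phi g m 1 t)))%C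
      with ((- Ci * Ci) * (RtoC k0 * Phi g m 0 t + RtoC t * Phi g m 1 t))%C by ring.
    replace (- Ci * Ci)%C with (RtoC 1) by (apply injective_projections; simpl; ring). ring. }
  unfold k0 in HF'. simpl INR in HF'.
  replace (RtoC (0 - INR m)) with (- RtoC (INR m))%C in HF' by (apply injective_projections; simpl; ring).
  replace (RtoC t * Phi g m 1 t)%C with ((- RtoC (INR m) * Phi g m 0 t + RtoC t * Phi g m 1 t) + RtoC (INR m) * Phi g m 0 t)%C by ring.
  rewrite HF'. ring.
Qed.

Lemma const_of_deriv0 (f : R -> R) a b : (forall x, a < x < b -> is_derive f x 0) ->
  forall x y, a < x < b -> a < y < b -> f x = f y.
Proof.
  intros Hd x y Hx Hy.
  destruct (Rtotal_order x y) as [Hlt|[Heq|Hgt]].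
  - destruct (MVT_cor2 f (fun _ => 0) x y Hlt) as [c [Hc _]].
    { intros c Hc. apply is_derive_Reals. apply Hd. lra. }
    lra.
  - subst; auto.
  - destruct (MVT_cor2 f (fun _ => 0) y x Hgt) as [c [Hc _]].
    { intros c Hc. apply is_derive_Reals. apply Hd. lra. }
    lra.
Qed.

Lemma rderiv_unique f t a b : rderiv f t a -> rderiv f t b -> a = b.
Proof.
  intros [A1 A2] [B1 B2]. apply injective_projections.
  - apply is_derive_unique in A1. apply is_derive_unique in B1. congruence.
  - apply is_derive_unique in A2. apply is_derive_unique in B2. congruence.
Qed.

Lemma rderiv_ext_loc f h t v d : 0 < d -> (forall s, Rabs (s - t) < d -> f s = h s) ->
  rderiv f t v -> rderiv h t v.
Proof.
  intros Hd He [H1 H2]. split.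
  - apply (is_derive_ext_loc (fun s => fst (f s))); auto.
    exists (mkposreal d Hd). intros y Hy. rewrite He; auto.
  - apply (is_derive_ext_loc (fun s => snd (f s))); auto.
    exists (mkposreal d Hd). intros y Hy. rewrite He; auto.
Qed.

Lemma Phi0_comp g m r t (c : C -> R) : tower g -> 0 < r < 1 -> 0 < t < 1 ->
  (forall x, 0 < x < 1 -> is_derive (fun s => c (Phi g m 0 s)) x (c (Phi g m 1 x))) ->
  (forall (x : R) (u : C), c (RtoC x * u)%C = x * c u) ->
  c (Phi g m 0 t) = t ^ m / r ^ m * c (Phi g m 0 r).
Proof.
  intros Hg Hr Ht Hd Cmul.
  assert (Hder : forall x, 0 < x < 1 -> is_derive (fun s => c (Phi g m 0 s) / s ^ m) x 0).
  { intros x Hx. eapply is_derive_eqv.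
    - apply is_derive_div. apply Hd; auto. apply (is_derive_pow (fun x => x) m x 1). apply (is_derive_id x).
      apply pow_nonzero; lra.
    - pose proof (Phi_rel g m x Hg Hx) as HR. apply (f_equal c) in HR. rewrite !Cmul in HR.
      assert (0 < x ^ m) by (apply pow_lt; lra).
      destruct m as [|m'].
      + simpl in HR. assert (c (Phi g 0 1 x) = 0) by nra. rewrite H0. simpl. match goal with |- @eq _ ?a ?b => change (@eq R a b) end. field.
      + rewrite S_INR in HR. simpl pred. 
        replace (c (Phi g (S m') 1 x) * x ^ S m' - c (Phi g (S m') 0 x) * (INR (S m') * 1 * x ^ m'))
          with (x ^ m' * (x * c (Phi g (S m') 1 x) - (INR m' + 1) * c (Phi g (S m') 0 x)))
          by (rewrite S_INR; simpl; ring).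
        rewrite HR. unfold Rdiv. match goal with |- @eq _ ?a ?b => change (@eq R a b) end. ring. }
  pose proof (const_of_deriv0 _ 0 1 Hder t r Ht Hr) as He. simpl in He.
  assert (0 < t ^ m) by (apply pow_lt; lra). assert (0 < r ^ m) by (apply pow_lt; lra).
  apply (Rmult_eq_compat_r (t ^ m)) in He.
  unfold Rdiv in *. rewrite Rmult_assoc, Rinv_l, Rmult_1_r in He by lra. rewrite He. ring.
Qed.

Lemma Phi0_form g m r t : tower g -> 0 < r < 1 -> 0 < t < 1 ->
  Phi g m 0 t = (RtoC (t ^ m / r ^ m) * Phi g m 0 r)%C.
Proof.
  intros Hg Hr Ht.
  assert (Hd : forall x, 0 < x < 1 -> rderiv (Phi g m 0) x (Phi g m 1 x)).
  { intros x Hx. apply Phi_deriv; auto. rewrite Rabs_pos_eq; lra. }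
  apply injective_projections.
  - rewrite (Phi0_comp g m r t fst); auto.
    + simpl. ring.
    + intros x Hx. apply (Hd x Hx).
    + intros x u; simpl; ring.
  - rewrite (Phi0_comp g m r t snd); auto.
    + simpl. ring.
    + intros x Hx. apply (Hd x Hx).
    + intros x u; simpl; ring.
Qed.

Definition Kf (m j : nat) : R := INR (fact m) / INR (fact (m - j)).

Lemma rderiv_poly (K : R) (n : nat) (C0 : C) t :
  rderiv (fun s => RtoC (K * s ^ n) * C0)%C t (RtoC (K * (INR n * t ^ pred n)) * C0)%C.
Proof.
  split; simpl.
  - auto_derive; auto. ring.
  - auto_derive; auto. ring.
Qed.

Lemma Phi_j_form g m r : tower g -> 0 < r < 1 ->
  forall j, (j <= m)%nat -> forall t, 0 < t < 1 ->
  Phi g m j t = (RtoC (Kf m j * t ^ (m - j)) * (RtoC (/ r ^ m) * Phi g m 0 r))%C.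
Proof.
  intros Hg Hr. induction j as [|j IH]; intros Hj t Ht.
  - rewrite (Phi0_form g m r t Hg Hr Ht). unfold Kf. rewrite Nat.sub_0_r.
    assert (INR (fact m) <> 0) by apply INR_fact_neq_0.
    assert (r ^ m <> 0) by (apply pow_nonzero; lra).
    apply injective_projections; simpl; field; auto.
  - set (d := Rmin t (1 - t)).
    assert (Hd : 0 < d) by (apply Rmin_pos; lra).
    assert (H1 : rderiv (Phi g m j) t (Phi g m (S j) t)).
    { apply Phi_deriv; auto. rewrite Rabs_pos_eq; lra. }
    assert (H2 : rderiv (fun s => RtoC (Kf m j * s ^ (m - j)) * (RtoC (/ r ^ m) * Phi g m 0 r))%C t
                         (Phi g m (S j) t)).
    { apply (rderiv_ext_loc (Phi g m j) _ t _ d Hd); auto.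
      intros s Hs. apply IH; [lia|].
      assert (Rabs (s - t) < t) by (eapply Rlt_le_trans; [exact Hs|apply Rmin_l]).
      assert (Rabs (s - t) < 1 - t) by (eapply Rlt_le_trans; [exact Hs|apply Rmin_r]).
      apply Rabs_def2 in H. apply Rabs_def2 in H0. lra. }
    pose proof (rderiv_poly (Kf m j) (m - j) (RtoC (/ r ^ m) * Phi g m 0 r)%C t) as H3.
    rewrite (rderiv_unique _ _ _ _ H2 H3).
    destruct (m - j)%nat as [|k] eqn:Hk; [lia|].
    assert (Hk' : (m - S j)%nat = k) by lia. rewrite Hk'. simpl pred.
    f_equal. f_equal. unfold Kf. rewrite Hk, Hk'. rewrite fact_simpl, mult_INR.
    assert (INR (fact k) <> 0) by apply INR_fact_neq_0.
    assert (INR (S k) <> 0) by (apply not_0_INR; lia).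
    field. auto.
Qed.

Lemma Phi_m_0 g m r : tower g -> 0 < r < 1 ->
  Phi g m m 0 = (RtoC (INR (fact m)) * (RtoC (/ r ^ m) * Phi g m 0 r))%C.
Proof.
  intros Hg Hr.
  set (L := (RtoC (INR (fact m)) * (RtoC (/ r ^ m) * Phi g m 0 r))%C).
  assert (Hin : forall t, 0 < t < 1 -> Phi g m m t = L).
  { intros t Ht. rewrite (Phi_j_form g m r Hg Hr m (le_n m) t Ht). unfold L, Kf.
    rewrite Nat.sub_diag. simpl. f_equal. f_equal. field. }
  assert (Hc : rcont (Phi g m m) 0).
  { eapply rderiv_rcont. apply Phi_deriv; auto. rewrite Rabs_R0; lra. }
  apply Cmod_eq_0 in Hc || idtac.
  destruct (Req_dec (Cmod (Phi g m m 0 - L)) 0) as [H0|H0].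
  - apply Cmod_eq_0 in H0. replace (Phi g m m 0) with ((Phi g m m 0 - L) + L)%C by ring.
    rewrite H0. ring.
  - exfalso. pose proof (Cmod_ge_0 (Phi g m m 0 - L)).
    destruct (Hc (Cmod (Phi g m m 0 - L))) as [d [Hd Hs]]; [lra|].
    set (t := Rmin (d / 2) (1 / 2)).
    assert (Ht : 0 < t < 1) by (unfold t; split; [apply Rmin_pos; lra|]; pose proof (Rmin_r (d/2) (1/2)); lra).
    assert (Htd : Rabs (t - 0) < d).
    { rewrite Rminus_0_r, Rabs_pos_eq by lra. pose proof (Rmin_l (d/2) (1/2)). unfold t in *. lra. }
    specialize (Hs t Htd). rewrite Hin in Hs by auto. rewrite Cmod_sym in Hs. lra.
Qed.

Lemma Phi_m_at0 g m : Phi g m m 0 = (RtoC (2 * PI) * g m (RtoC 0))%C.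
Proof.
  unfold Phi. rewrite (cRI_ext _ (fun _ => g m (RtoC 0))).
  - rewrite cRI_const. f_equal. f_equal. ring.
  - intros x _. rewrite Rminus_eq_0, Rmult_0_l, E_0.
    replace (RtoC 0 + RtoC 0 * E x)%C with (RtoC 0) by ring. ring.
Qed.

Lemma cauchy_coef g m r B : tower g -> 0 < r < 1 ->
  (forall z, Cmod z = r -> Cmod (g 0%nat z) <= B) ->
  Cmod (Cdiv (g m (RtoC 0)) (RtoC (INR (fact m)))) <= B / r ^ m.
Proof.
  intros Hg Hr HB.
  pose proof (Phi_m_0 g m r Hg Hr) as H1. rewrite Phi_m_at0 in H1.
  assert (Hf : INR (fact m) <> 0) by apply INR_fact_neq_0.
  assert (Hrm : 0 < r ^ m) by (apply pow_lt; lra).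
  assert (Hpi : 0 < PI) by apply PI_RGT_0.
  assert (Eq : Cdiv (g m (RtoC 0)) (RtoC (INR (fact m))) = (RtoC (/ (2 * PI * r ^ m)) * Phi g m 0 r)%C).
  { assert (Hg0 : g m (RtoC 0) = (RtoC (/ (2 * PI)) * (RtoC (INR (fact m)) * (RtoC (/ r ^ m) * Phi g m 0 r)))%C).
    { rewrite <- H1. rewrite Cmult_assoc. rewrite <- RtoC_mult. rewrite Rinv_l by lra. ring. }
    rewrite Hg0. field_simplify_eq.
    - apply injective_projections; simpl; field; repeat split; lra.
    - intro HH. apply (f_equal fst) in HH. simpl in HH. auto. }
  rewrite Eq, Cmod_mult, Cmod_R.
  assert (Hb : Cmod (Phi g m 0 r) <= (PI - - PI) * B).
  { unfold Phi. apply cRI_bound. lra. apply integ_rcont; auto. rewrite Rabs_pos_eq; lra.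
    intros x _. rewrite Cmod_mult. simpl INR. rewrite Cmod_E, Rmult_1_l. apply HB.
    rewrite Cmod_circ, Rabs_pos_eq; lra. }
  rewrite Rabs_pos_eq by (apply Rlt_le, Rinv_0_lt_compat; nra).
  apply Rle_trans with (/ (2 * PI * r ^ m) * ((PI - - PI) * B)).
  { apply Rmult_le_compat_l; auto. apply Rlt_le, Rinv_0_lt_compat; nra. }
  right. field. split; lra.
Qed.

Lemma rderiv_path_w (w : C) t th : rderiv (fun s => w + RtoC t * E s)%C th (RtoC t * (RtoC 1 * Ci * E (1 * th)))%C.
Proof.
  eapply rderiv_eq. eapply rderiv_plus. apply rderiv_const.
  apply rderiv_mult. apply rderiv_const.
  apply (rderiv_ext (fun s => E (1 * s))). intros; rewrite Rmult_1_l; auto. apply rderiv_E.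
  rewrite Rmult_1_l. ring.
Qed.

Lemma Cmod_circ_w (w : C) t th : Cmod (w + RtoC t * E th - w)%C = Rabs t.
Proof.
  replace (w + RtoC t * E th - w)%C with (RtoC t * E th)%C by ring.
  rewrite Cmod_mult, Cmod_E, Cmod_R. ring.
Qed.

Lemma mean_value (H H' : C -> C) (w : C) (dl d2 : R) : 0 < dl < d2 ->
  (forall z, Cmod (z - w) < d2 -> cderiv_at H z (H' z) /\ ccont H' z) ->
  cRI (fun th => H (w + RtoC dl * E th))%C (- PI) PI = (RtoC (2 * PI) * H w)%C.
Proof.
  intros Hd Hyp.
  set (Psi := fun t => cRI (fun th => E (0 * th) * H (w + RtoC t * E th))%C (- PI) PI).
  set (Psi' := fun t => cRI (fun th => E (0 * th) * E th * H' (w + RtoC t * E th))%C (- PI) PI).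
  assert (Hder : forall t, Rabs t < d2 -> rderiv Psi t (Psi' t)).
  { intros t Ht. apply (param_cx H H' w 0 (- PI) PI t (d2 - Rabs t)). lra.
    intros t' th Ht'. apply Hyp. rewrite Cmod_circ_w.
    pose proof (Rabs_triang (t' - t) t). replace (t' - t + t) with t' in H0 by ring. lra. }
  assert (Hz : forall t, 0 < t < d2 -> Psi' t = RtoC 0).
  { intros t Ht.
    set (q := fun s => H (w + RtoC t * E s)%C).
    set (q' := fun s => (H' (w + RtoC t * E s) * (RtoC t * (RtoC 1 * Ci * E (1 * s))))%C).
    assert (Hin : forall s, Cmod (w + RtoC t * E s - w)%C < d2).
    { intros s. rewrite Cmod_circ_w, Rabs_pos_eq; lra. }
    assert (HF : cRI q' (- PI) PI = (q PI - q (- PI)%R)%C).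
    { apply cRI_FTC.
      - intros x _. apply (chain_rderiv H (fun s => w + RtoC t * E s)%C). apply Hyp, Hin.
        apply rderiv_path_w.
      - intros x _. apply rcont_mult.
        apply (rcont_comp H' (fun s => w + RtoC t * E s)%C). apply Hyp, Hin. apply rcont_circ.
        apply rcont_mult. apply rcont_const. apply rcont_mult. apply rcont_const. apply rcont_E. }
    assert (Hq0 : (q PI - q (- PI)%R)%C = RtoC 0) by (unfold q; rewrite E_negPI; ring).
    rewrite Hq0 in HF.
    assert (HF2 : cRI q' (- PI) PI = (RtoC t * Ci * Psi' t)%C).
    { unfold Psi'. rewrite <- cRI_scal. apply cRI_ext. intros x _. unfold q'.
      rewrite Rmult_0_l, Rmult_1_l, E_0. ring.
      intros x _. apply rcont_mult. apply rcont_mult. apply rcont_E.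
      apply (rcont_ext (fun s => E (1 * s))). intros; rewrite Rmult_1_l; auto. apply rcont_E.
      apply (rcont_comp H' (fun s => w + RtoC t * E s)%C). apply Hyp, Hin. apply rcont_circ. }
    rewrite HF2 in HF.
    assert (Hnz : (RtoC t * Ci)%C <> RtoC 0).
    { intro HH. apply (f_equal snd) in HH. simpl in HH. lra. }
    replace (Psi' t) with (/ (RtoC t * Ci) * (RtoC t * Ci) * Psi' t)%C by (rewrite Cinv_l; [ring|auto]).
    rewrite <- Cmult_assoc, HF. ring. }
  assert (Heq : Psi dl = Psi 0).
  { assert (Hall : forall c, 0 <= c <= dl -> rderiv Psi c (Psi' c)).
    { intros c Hc. apply Hder. rewrite Rabs_pos_eq; lra. }
    apply injective_projections.
    - destruct (MVT_cor2 (fun s => fst (Psi s)) (fun s => fst (Psi' s)) 0 dl) as [c [Hc1 Hc2]]; [lra| |].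
      { intros c Hc. apply is_derive_Reals. apply (Hall c Hc). }
      rewrite Hz in Hc1 by lra. cbv beta in Hc1. change (fst (RtoC 0)) with 0 in Hc1. change (snd (RtoC 0)) with 0 in Hc1. lra.
    - destruct (MVT_cor2 (fun s => snd (Psi s)) (fun s => snd (Psi' s)) 0 dl) as [c [Hc1 Hc2]]; [lra| |].
      { intros c Hc. apply is_derive_Reals. apply (Hall c Hc). }
      rewrite Hz in Hc1 by lra. cbv beta in Hc1. change (fst (RtoC 0)) with 0 in Hc1. change (snd (RtoC 0)) with 0 in Hc1. lra. }
  assert (HP0 : Psi 0 = (RtoC (2 * PI) * H w)%C).
  { unfold Psi. rewrite (cRI_ext _ (fun _ => H w)).
    - rewrite cRI_const. f_equal. f_equal. ring.
    - intros x _. rewrite Rmult_0_l, E_0. replace (w + RtoC 0 * E x)%C with w by ring. ring. }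
  rewrite <- HP0, <- Heq. unfold Psi. apply cRI_ext. intros x _. rewrite Rmult_0_l, E_0. ring.
Qed.

Lemma zero_integral (h : R -> R) a b : a < b ->
  (forall x, a <= x <= b -> continuous h x) ->
  (forall x, a <= x <= b -> 0 <= h x) ->
  RInt h a b = 0 -> forall x, a <= x <= b -> h x = 0.
Proof.
  intros Hab Hc Hp Hi x0 Hx0.
  destruct (Req_dec (h x0) 0) as [|Hne]; auto. exfalso.
  assert (Hpos : 0 < h x0) by (specialize (Hp x0 Hx0); lra).
  pose proof (Hc x0 Hx0) as Hcx. apply continuity_pt_filterlim in Hcx.
  destruct (contpt_ed' h x0 Hcx (h x0 / 2)) as [eta [Heta Hy]]; [lra|].
  set (c := Rmax a (x0 - eta / 2)). set (d := Rmin b (x0 + eta / 2)).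
  assert (Hac : a <= c) by apply Rmax_l.
  assert (Hdb : d <= b) by apply Rmin_l.
  assert (Hcd : c < d).
  { unfold c, d. apply Rmax_case_strong; apply Rmin_case_strong; intros; lra. }
  assert (Hcx0 : c <= x0) by (unfold c; apply Rmax_case_strong; intros; lra).
  assert (Hdx0 : x0 <= d) by (unfold d; apply Rmin_case_strong; intros; lra).
  assert (Hc2 : c - x0 >= - (eta / 2)) by (unfold c; apply Rmax_case_strong; intros; lra).
  assert (Hd2 : d - x0 <= eta / 2) by (unfold d; apply Rmin_case_strong; intros; lra).
  assert (Ex : forall u v, a <= u -> u <= v -> v <= b -> ex_RInt h u v).
  { intros u v H1 H2 H3. apply (@ex_RInt_continuous R_CompleteNormedModule).
    intros z Hz. rewrite Rmin_left in Hz by lra. rewrite Rmax_right in Hz by lra. apply Hc. lra. }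
  assert (I1 : 0 <= RInt h a c).
  { apply RInt_ge_0; auto. apply Ex; lra. intros; apply Hp; lra. }
  assert (I3 : 0 <= RInt h d b).
  { apply RInt_ge_0; auto. apply Ex; lra. intros; apply Hp; lra. }
  assert (I2 : 0 < RInt h c d).
  { apply RInt_gt_0; auto.
    - intros y Hy'. assert (Rabs (y - x0) < eta) by (apply Rabs_def1; lra).
      specialize (Hy y H). apply Rabs_def2 in Hy. lra.
    - intros y Hy'. apply Hc. lra. }
  assert (Ch1 : plus (RInt h a c) (RInt h c b) = RInt h a b).
  { apply (@RInt_Chasles R_CompleteNormedModule); apply Ex; lra. }
  assert (Ch2 : plus (RInt h c d) (RInt h d b) = RInt h c b).
  { apply (@RInt_Chasles R_CompleteNormedModule); apply Ex; lra. }
  unfold plus in Ch1, Ch2; simpl in Ch1, Ch2. lra.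
Qed.

Lemma angle_exists (u : C) : Cmod u = 1 -> exists th, - PI <= th <= PI /\ E th = u.
Proof.
  intros Hu. destruct u as [x y].
  assert (Hxy : x * x + y * y = 1).
  { unfold Cmod in Hu; simpl in Hu.
    assert (0 <= x * (x * 1) + y * (y * 1)) by nra.
    pose proof (sqrt_sqrt _ H). rewrite Hu in H0. nra. }
  assert (Hx : -1 <= x <= 1) by nra.
  pose proof (acos_bound x).
  assert (Hs : sqrt (1 - x²) = Rabs y).
  { rewrite <- sqrt_Rsqr_abs. f_equal. unfold Rsqr. lra. }
  destruct (Rle_or_lt 0 y) as [Hy|Hy].
  - exists (acos x). split; [lra|]. unfold E. rewrite cos_acos, sin_acos by auto. rewrite Hs, Rabs_pos_eq; auto.
  - exists (- acos x). split; [lra|]. unfold E. rewrite cos_neg, sin_neg, cos_acos, sin_acos by auto.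
    rewrite Hs, Rabs_left; auto. f_equal. ring.
Qed.

Lemma circle_eq (H H' : C -> C) (w : C) (dl d2 Mx : R) : 0 < dl < d2 ->
  (forall z, Cmod (z - w) < d2 -> cderiv_at H z (H' z) /\ ccont H' z) ->
  (forall th, Cmod (H (w + RtoC dl * E th)%C) <= Mx) -> Cmod (H w) = Mx ->
  forall th, - PI <= th <= PI -> Cmod (H (w + RtoC dl * E th)%C) = Mx.
Proof.
  intros Hd Hyp Hle HM th Hth.
  pose proof (mean_value H H' w dl d2 Hd Hyp) as MV.
  set (f := fun th => H (w + RtoC dl * E th)%C) in *.
  set (v := cRI f (- PI) PI) in *.
  assert (Hpi : 0 < PI) by apply PI_RGT_0.
  assert (Hvm : Cmod v = 2 * PI * Mx).
  { rewrite MV, Cmod_mult, Cmod_R, Rabs_pos_eq, HM; lra. }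
  pose proof (Cmod_ge_0 (H w)).
  destruct (Req_dec Mx 0) as [HM0|HM0].
  { apply Rle_antisym. apply Hle. rewrite HM0. apply Cmod_ge_0. }
  assert (HMp : 0 < Mx) by lra.
  assert (Hf : rcont_on f (- PI) PI).
  { intros x _. unfold f. apply (rcont_comp H (fun s => w + RtoC dl * E s)%C).
    eapply cderiv_ccont. apply Hyp. rewrite Cmod_circ_w, Rabs_pos_eq; lra. apply rcont_circ. }
  set (k := fun s => (RtoC (Cmod v * Mx) + RtoC (-1) * (Cconj v * f s))%C).
  assert (Hkf : forall s, fst (k s) = Cmod v * Mx - (fst v * fst (f s) + snd v * snd (f s))).
  { intros s. unfold k. simpl. ring. }
  assert (Hkc : forall s, continuous (fun s => fst (k s)) s).
  { intros s. apply rcont_fst. unfold k. apply rcont_plus. apply rcont_const.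
    apply rcont_mult. apply rcont_const. apply rcont_mult. apply rcont_const.
    unfold f. apply (rcont_comp H (fun s => w + RtoC dl * E s)%C).
    eapply cderiv_ccont. apply Hyp. rewrite Cmod_circ_w, Rabs_pos_eq; lra. apply rcont_circ. }
  assert (Hdot : forall s, fst v * fst (f s) + snd v * snd (f s) <= Cmod v * Cmod (f s)).
  { intros s. eapply Rle_trans. apply CS_ineq.
    assert (K1 : Cmod v = sqrt (fst v * fst v + snd v * snd v)) by (unfold Cmod; f_equal; ring).
    assert (K2 : Cmod (f s) = sqrt (fst (f s) * fst (f s) + snd (f s) * snd (f s))) by (unfold Cmod; f_equal; ring).
    rewrite <- K1, <- K2. lra. }
  assert (Hkp : forall s, 0 <= fst (k s)).
  { intros s. rewrite Hkf. specialize (Hdot s). pose proof (Hle s). fold f in H1.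
    pose proof (Cmod_ge_0 v). assert (Cmod v * Cmod (f s) <= Cmod v * Mx) by (apply Rmult_le_compat_l; auto). lra. }
  pose proof (exRI_fst f _ _ Hf) as E1. pose proof (exRI_snd f _ _ Hf) as E2.
  assert (Hint : RInt (fun s => fst (k s)) (- PI) PI = 0).
  { rewrite (RInt_ext _ (fun s => Cmod v * Mx - (fst v * fst (f s) + snd v * snd (f s)))) by (intros; apply Hkf).
    assert (S1 : RInt (fun x => fst v * fst (f x)) (- PI) PI = fst v * RInt (fun x => fst (f x)) (- PI) PI)
      by (exact (@RInt_scal R_CompleteNormedModule (fun x => fst (f x)) _ _ (fst v) E1)).
    assert (S2 : RInt (fun x => snd v * snd (f x)) (- PI) PI = snd v * RInt (fun x => snd (f x)) (- PI) PI)
      by (exact (@RInt_scal R_CompleteNormedModule (fun x => snd (f x)) _ _ (snd v) E2)).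
    assert (EE1 : ex_RInt (fun x => fst v * fst (f x)) (- PI) PI) by (apply (@ex_RInt_scal R_CompleteNormedModule); auto).
    assert (EE2 : ex_RInt (fun x => snd v * snd (f x)) (- PI) PI) by (apply (@ex_RInt_scal R_CompleteNormedModule); auto).
    assert (SP : RInt (fun x => fst v * fst (f x) + snd v * snd (f x)) (- PI) PI =
                 RInt (fun x => fst v * fst (f x)) (- PI) PI + RInt (fun x => snd v * snd (f x)) (- PI) PI)
      by (exact (@RInt_plus R_CompleteNormedModule _ _ _ _ EE1 EE2)).
    assert (SM : RInt (fun s => Cmod v * Mx - (fst v * fst (f s) + snd v * snd (f s))) (- PI) PI =
                 RInt (fun _ => Cmod v * Mx) (- PI) PI - RInt (fun x => fst v * fst (f x) + snd v * snd (f x)) (- PI) PI).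
    { exact (@RInt_minus R_CompleteNormedModule _ _ _ _ (@ex_RInt_const R_CompleteNormedModule _ _ _)
               (@ex_RInt_plus R_CompleteNormedModule _ _ _ _ EE1 EE2)). }
    rewrite SM, SP, S1, S2.
    assert (Hk : RInt (fun _ => Cmod v * Mx) (- PI) PI = (PI - - PI) * (Cmod v * Mx))
      by (rewrite (@RInt_const R_CompleteNormedModule); reflexivity).
    rewrite Hk.
    assert (Hv2 : Cmod v * Cmod v = fst v * fst v + snd v * snd v).
    { unfold Cmod. rewrite sqrt_sqrt. ring. pose proof (Rle_0_sqr (fst v)). pose proof (Rle_0_sqr (snd v)).
      unfold Rsqr in *. lra. }
    replace (RInt (fun x => fst (f x)) (- PI) PI) with (fst v) by reflexivity.
    replace (RInt (fun x => snd (f x)) (- PI) PI) with (snd v) by reflexivity.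
    rewrite <- Hv2. match goal with |- @eq _ ?a ?b => change (@eq R a b) end. rewrite Hvm. ring. }
  assert (Hz : fst (k th) = 0).
  { apply (zero_integral (fun s => fst (k s)) (- PI) PI); auto. lra. }
  rewrite Hkf in Hz. specialize (Hdot th).
  apply Rle_antisym. apply Hle.
  assert (0 < Cmod v) by nra.
  apply (Rmult_le_reg_l (Cmod v)); auto. change (H (w + RtoC dl * E th)%C) with (f th). lra.
Qed.

Definition cont2 (h : R -> R -> R) u v : Prop :=
  forall eps, 0 < eps -> exists d, 0 < d /\ forall u' v', Rabs (u' - u) < d -> Rabs (v' - v) < d ->
    Rabs (h u' v' - h u v) < eps.

Definition clamp a b x := Rmax a (Rmin b x).

Lemma clamp_in a b x : a <= b -> a <= clamp a b x <= b.
Proof. intros. unfold clamp. apply Rmax_case_strong; apply Rmin_case_strong; intros; lra. Qed.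

Lemma clamp_id a b x : a <= x <= b -> clamp a b x = x.
Proof. intros. unfold clamp. rewrite Rmin_right by lra. rewrite Rmax_right; lra. Qed.

Lemma clamp_lip a b x y : a <= b -> Rabs (clamp a b x - clamp a b y) <= Rabs (x - y).
Proof.
  intros. unfold clamp.
  repeat (apply Rmax_case_strong || apply Rmin_case_strong); intros;
  repeat match goal with |- context [Rabs ?z] => 
    first [rewrite (Rabs_pos_eq z) by lra | rewrite (Rabs_left1 z) by lra] end; 
  try (match goal with |- context [Rabs ?z] => destruct (Rle_or_lt 0 z);
    [rewrite (Rabs_pos_eq z) by lra | rewrite (Rabs_left z) by lra] end); lra.
Qed.

Lemma unif_cont2 h a b c d : a <= b -> c <= d ->
  (forall u v, a <= u <= b -> c <= v <= d -> cont2 h u v) ->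
  forall eps, 0 < eps -> exists dl, 0 < dl /\ forall x y x' y',
    a <= x <= b -> c <= y <= d -> a <= x' <= b -> c <= y' <= d ->
    Rabs (x - x') < dl -> Rabs (y - y') < dl -> Rabs (h x y - h x' y') < eps.
Proof.
  intros Hab Hcd Hc eps He.
  assert (Hg : forall u v, {dl : posreal | forall u' v', Rabs (u' - clamp a b u) < dl -> Rabs (v' - clamp c d v) < dl ->
     Rabs (h u' v' - h (clamp a b u) (clamp c d v)) < eps / 2}).
  { intros u v. apply constructive_indefinite_description.
    destruct (Hc (clamp a b u) (clamp c d v) (clamp_in a b u Hab) (clamp_in c d v Hcd) (eps/2)) as [dl [Hdl H]]; [lra|].
    exists (mkposreal dl Hdl). exact H. }
  set (gauge := fun u v => proj1_sig (Hg u v)).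
  assert (Hgp : forall u v, 0 < gauge u v / 2) by (intros; pose proof (cond_pos (gauge u v)); lra).
  destruct (compactness_value_2d a b c d (fun u v => mkposreal _ (Hgp u v))) as [dl Hdl].
  exists dl. split; [apply cond_pos|].
  intros x y x' y' Hx Hy Hx' Hy' Hxx Hyy.
  specialize (Hdl x y Hx Hy).
  apply NNPP in Hdl. destruct Hdl as [u [v [Hu [Hv [H1 [H2 H3]]]]]]. simpl in H1, H2, H3.
  unfold gauge in *. set (s := Hg u v) in *. clearbody s. destruct s as [g0 Hp]. simpl in *.
  pose proof (cond_pos g0) as Hgpos.
  rewrite (clamp_id a b u Hu), (clamp_id c d v Hv) in Hp.
  assert (A1 : Rabs (h x y - h u v) < eps / 2) by (apply Hp; lra).
  assert (A2 : Rabs (h x' y' - h u v) < eps / 2).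
  { apply Hp.
    - pose proof (Rabs_triang (x' - x) (x - u)). replace (x' - x + (x - u)) with (x' - u) in H by ring.
      rewrite Rabs_minus_sym in Hxx. lra.
    - pose proof (Rabs_triang (y' - y) (y - v)). replace (y' - y + (y - v)) with (y' - v) in H by ring.
      rewrite Rabs_minus_sym in Hyy. lra. }
  pose proof (Rabs_triang (h x y - h u v) (h u v - h x' y')).
  replace (h x y - h u v + (h u v - h x' y')) with (h x y - h x' y') in H by ring.
  rewrite Rabs_minus_sym in A2. lra.
Qed.

Lemma evt2 h a b c d : a <= b -> c <= d ->
  (forall u v, a <= u <= b -> c <= v <= d -> cont2 h u v) ->
  exists u0 v0, a <= u0 <= b /\ c <= v0 <= d /\
    forall u v, a <= u <= b -> c <= v <= d -> h u v <= h u0 v0.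
Proof.
  intros Hab Hcd Hc.
  set (ht := fun u v => h (clamp a b u) (clamp c d v)).
  assert (Hu : forall eps, 0 < eps -> exists dl, 0 < dl /\ forall x y x' y',
     Rabs (x - x') < dl -> Rabs (y - y') < dl -> Rabs (ht x y - ht x' y') < eps).
  { intros eps He. destruct (unif_cont2 h a b c d Hab Hcd Hc eps He) as [dl [Hdl H]].
    exists dl. split; auto. intros. unfold ht. apply H; try apply clamp_in; auto.
    eapply Rle_lt_trans; [apply clamp_lip; auto|auto].
    eapply Rle_lt_trans; [apply clamp_lip; auto|auto]. }
  assert (Hv : forall t, {v | c <= v <= d /\ forall v', c <= v' <= d -> ht t v' <= ht t v}).
  { intros t. apply constructive_indefinite_description.
    destruct (continuity_ab_maj (ht t) c d Hcd) as [v [Hv1 Hv2]].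
    - intros v _. apply contpt_ed. intros eps He. destruct (Hu eps He) as [dl [Hdl H]].
      exists dl; split; auto. intros y Hy. apply H; auto. rewrite Rminus_eq_0, Rabs_R0; auto.
    - exists v. split; auto. }
  set (M := fun t => ht t (proj1_sig (Hv t))).
  assert (HM : forall t, continuity_pt M t).
  { intros t. apply contpt_ed. intros eps He. destruct (Hu (eps / 2)) as [dl [Hdl H]]; [lra|].
    exists dl; split; auto. intros y Hy.
    destruct (proj2_sig (Hv t)) as [Ht1 Ht2]. destruct (proj2_sig (Hv y)) as [Hy1 Hy2].
    unfold M.
    set (vt := proj1_sig (Hv t)) in *. set (vy := proj1_sig (Hv y)) in *.
    assert (Rabs (ht y vt - ht t vt) < eps / 2) by (apply H; auto; rewrite Rminus_eq_0, Rabs_R0; auto).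
    assert (Rabs (ht y vy - ht t vy) < eps / 2) by (apply H; auto; rewrite Rminus_eq_0, Rabs_R0; auto).
    specialize (Ht2 vy Hy1). specialize (Hy2 vt Ht1).
    apply Rabs_def2 in H0. apply Rabs_def2 in H1. apply Rabs_def1; lra. }
  destruct (continuity_ab_maj M a b Hab) as [t0 [Ht0 Ht0b]].
  { intros; apply HM. }
  destruct (proj2_sig (Hv t0)) as [Hv0 Hv0'].
  exists t0, (proj1_sig (Hv t0)). split; auto. split; auto.
  intros u v Hu' Hv'.
  specialize (Ht0 u Hu'). unfold M in Ht0.
  destruct (proj2_sig (Hv u)) as [Hvu1 Hvu]. specialize (Hvu v Hv').
  set (vt0 := proj1_sig (Hv t0)) in *.
  assert (E1 : ht u v = h u v) by (unfold ht; rewrite (clamp_id a b u), (clamp_id c d v); auto).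
  assert (E2 : ht t0 vt0 = h t0 vt0) by (unfold ht; rewrite (clamp_id a b t0), (clamp_id c d vt0); auto).
  lra.
Qed.

Lemma rcont_ray (z0 : C) t : rcont (fun s => RtoC s * z0)%C t.
Proof.
  eapply rderiv_rcont. eapply (rderiv_ext (fun s => RtoC 0 + RtoC s * z0)%C).
  intros; ring. apply rderiv_lin.
Qed.

Lemma Cmod_ray (s : R) (z0 : C) : Cmod (RtoC s * z0)%C = Rabs s * Cmod z0.
Proof. rewrite Cmod_mult, Cmod_R; auto. Qed.

Lemma ray_lemma (H H' : C -> C) (z0 : C) (R1 Mx : R) :
  (forall z, 0 < Cmod z < 1 -> cderiv_at H z (H' z) /\ ccont H' z) ->
  0 < Cmod z0 < R1 -> R1 < 1 ->
  (forall z, 0 < Cmod z <= R1 -> Cmod (H z) <= Mx) ->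
  Cmod (H z0) = Mx ->
  forall t, 0 < t <= 1 -> Cmod (H (RtoC t * z0)%C) = Mx.
Proof.
  intros Hyp Hz0 HR1 Hb HM t1 Ht1.
  set (r0 := Cmod z0) in *.
  set (p := fun s => (RtoC s * z0)%C).
  assert (Hp : forall s, 0 < s <= 1 -> 0 < Cmod (p s) <= r0).
  { intros s Hs. unfold p. rewrite Cmod_ray, Rabs_pos_eq by lra. fold r0. nra. }
  assert (Hpc : forall s, 0 < s <= 1 -> continuity_pt (fun s => Cmod (H (p s))) s).
  { intros s Hs. apply rcont_Cmod. apply (rcont_comp H p). 
    eapply cderiv_ccont. apply Hyp. pose proof (Hp s Hs). lra. apply rcont_ray. }
  destruct (Req_dec (Cmod (H (p t1))) Mx) as [Heq|Hne]; [exact Heq|exfalso].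
  set (S := fun s => t1 <= s <= 1 /\ Cmod (H (p s)) = Mx).
  assert (S1 : S 1).
  { split; [lra|]. unfold p. replace (RtoC 1 * z0)%C with z0 by ring. exact HM. }
  destruct (completeness (fun y => S (- y))) as [m [Hub Hlub]].
  { exists (- t1). intros y [Hy _]. lra. }
  { exists (-1). cbv beta. replace (- -1) with 1 by ring. exact S1. }
  set (ts := - m).
  assert (Hi : forall s, S s -> ts <= s).
  { intros s Hs. assert (- s <= m) by (apply Hub; rewrite Ropp_involutive; auto). unfold ts; lra. }
  assert (Hii : forall eta, 0 < eta -> exists s, S s /\ s < ts + eta).
  { intros eta He. apply NNPP. intro Hn.
    assert (m <= m - eta). 
    { apply Hlub. intros y Hy. destruct (Rle_or_lt y (m - eta)) as [|Hlt]; auto.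
      exfalso. apply Hn. exists (- y). split; auto. unfold ts; lra. }
    lra. }
  assert (Hts1 : ts <= 1) by (apply Hi; auto).
  assert (Htst1 : t1 <= ts).
  { destruct (Hii 1 Rlt_0_1) as [s [[Hs1 _] _]].
    destruct (Rle_or_lt t1 ts); auto. exfalso.
    assert (m <= - t1). { apply Hlub. intros y [Hy _]. lra. } unfold ts in *; lra. }
  assert (Hiv : Cmod (H (p ts)) = Mx).
  { destruct (Req_dec (Cmod (H (p ts))) Mx) as [|Hn]; auto. exfalso.
    set (e := Rabs (Cmod (H (p ts)) - Mx)).
    assert (He : 0 < e) by (apply Rabs_pos_lt; lra).
    destruct (contpt_ed' _ ts (Hpc ts (conj (Rlt_le_trans _ _ _ (proj1 Ht1) Htst1) Hts1)) e He) as [dl [Hdl Hc]].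
    destruct (Hii dl Hdl) as [s [[Hs1 Hs2] Hs3]].
    assert (ts <= s) by (apply Hi; split; auto).
    assert (Rabs (s - ts) < dl) by (rewrite Rabs_pos_eq; lra).
    specialize (Hc s H1). rewrite Hs2 in Hc. unfold e in Hc. rewrite Rabs_minus_sym in Hc. lra. }
  assert (Hv : t1 < ts).
  { destruct Htst1 as [|Heq]; auto. exfalso. apply Hne. rewrite Heq; auto. }
  set (w := p ts).
  assert (Hw : 0 < Cmod w <= r0) by (apply Hp; lra).
  set (d2 := Rmin (Cmod w) (R1 - Cmod w)).
  assert (Hd2 : 0 < d2) by (apply Rmin_pos; lra).
  set (dl := Rmin (d2 / 2) ((ts - t1) * r0)).
  assert (Hdl : 0 < dl < d2).
  { split. apply Rmin_pos; nra. eapply Rle_lt_trans; [apply Rmin_l|lra]. }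
  assert (Hreg : forall z, Cmod (z - w) < d2 -> 0 < Cmod z < R1).
  { intros z Hz. pose proof (Cmod_tri3 w z). pose proof (Cmod_tri3 z w).
    rewrite Cmod_sym in H0. pose proof (Rmin_l (Cmod w) (R1 - Cmod w)). pose proof (Rmin_r (Cmod w) (R1 - Cmod w)).
    fold d2 in H2, H3. lra. }
  assert (Hce := circle_eq H H' w dl d2 Mx Hdl).
  assert (Hr0 : 0 < r0) by lra.
  destruct (angle_exists (RtoC (- / r0) * z0)%C) as [th [Hth Eth]].
  { rewrite Cmod_mult, Cmod_R, Rabs_left. fold r0. field. lra. apply Ropp_lt_gt_0_contravar.
    apply Rinv_0_lt_compat; lra. }
  assert (Hpt : (w + RtoC dl * E th)%C = p (ts - dl / r0)).
  { rewrite Eth. unfold w, p. apply injective_projections; simpl; field; lra. }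
  assert (Hcirc : forall th', Cmod (w + RtoC dl * E th' - w)%C < d2).
  { intros th'. rewrite Cmod_circ_w, Rabs_pos_eq; lra. }
  specialize (Hce (fun z Hz => Hyp z (conj (proj1 (Hreg z Hz)) (Rlt_trans _ _ _ (proj2 (Hreg z Hz)) HR1)))).
  assert (Hs' : S (ts - dl / r0)).
  { split.
    - split. 
      + assert (dl <= (ts - t1) * r0) by apply Rmin_r.
        assert (dl / r0 <= ts - t1). { apply (Rmult_le_reg_r r0); auto. unfold Rdiv. rewrite Rmult_assoc, Rinv_l; lra. }
        lra.
      + assert (0 < dl / r0) by (apply Rdiv_lt_0_compat; lra). lra.
    - rewrite <- Hpt. apply Hce; auto.
      + intros th'. apply Hb. pose proof (Hreg _ (Hcirc th')). lra.
  }
  specialize (Hi _ Hs'). assert (0 < dl / r0) by (apply Rdiv_lt_0_compat; lra). lra.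
Qed.

Lemma polar (z : C) : z <> RtoC 0 -> exists th, - PI <= th <= PI /\ z = (RtoC (Cmod z) * E th)%C.
Proof.
  intros Hz. assert (Hm : 0 < Cmod z) by (apply (proj1 (Cmod_gt_0 _)); auto).
  destruct (angle_exists (RtoC (/ Cmod z) * z)%C) as [th [Hth Eth]].
  { rewrite Cmod_mult, Cmod_R, Rabs_pos_eq. field. lra. apply Rlt_le, Rinv_0_lt_compat; lra. }
  exists th. split; auto. rewrite Eth.
  apply injective_projections; simpl; field; lra.
Qed.

Lemma bernoulli (x : R) (n : nat) : 0 <= x <= 1 -> 1 - INR n * x <= (1 - x) ^ n.
Proof.
  intros Hx. induction n.
  - simpl. lra.
  - rewrite S_INR. simpl. assert (0 <= 1 - x) by lra.
    assert (0 <= INR n) by apply pos_INR. nra.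
Qed.

Definition Gf (g : nat -> C -> C) (n : nat) (z : C) : C := (g 0%nat z * / cpow z n)%C.
Definition G'f (g : nat -> C -> C) (n : nat) (z : C) : C :=
  (g 1%nat z * / cpow z n + g 0%nat z * (RtoC (INR n) * cpow z (pred n) * RtoC 1 * - / (cpow z n * cpow z n)))%C.

Lemma G_hyp g n : tower g -> forall z, 0 < Cmod z < 1 -> cderiv_at (Gf g n) z (G'f g n z) /\ ccont (G'f g n) z.
Proof.
  intros Hg z Hz.
  assert (Hz0 : z <> RtoC 0) by (apply (proj2 (Cmod_gt_0 _)); lra).
  assert (Hd : in_disk z) by (unfold in_disk; lra).
  assert (Hp : cpow z n <> RtoC 0) by (apply cpow_nz; auto).
  split.
  - unfold Gf, G'f. eapply cderiv_eq.
    + apply cderiv_mult. apply Hg, Hd.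
      apply (cderiv_comp Cinv (fun w => cpow w n)). apply cderiv_inv; auto.
      apply (cderiv_cpow (fun w => w)). apply cderiv_id.
    + cbv beta. ring.
  - unfold G'f. apply ccont_plus; apply ccont_mult.
    + apply tower_ccont; auto.
    + apply ccont_inv; auto. apply (ccont_cpow (fun w => w)). apply ccont_id.
    + apply tower_ccont; auto.
    + repeat apply ccont_mult.
      * apply ccont_const.
      * apply (ccont_cpow (fun w => w)). apply ccont_id.
      * apply ccont_const.
      * apply (ccont_ext (fun w => RtoC (-1) * / (cpow w n * cpow w n))%C).
        { intros; apply injective_projections; simpl; ring. }
        apply ccont_mult. apply ccont_const. apply ccont_inv.
        apply ccont_mult; apply (ccont_cpow (fun w => w)); apply ccont_id.
        intro HH. apply (f_equal Cmod) in HH. rewrite Cmod_mult, Cmod_0 in HH.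
        apply (proj1 (Cmod_gt_0 _)) in Hp. nra.
Qed.

Lemma Gmod g n phi z : g 0%nat = (fun z => cpow (phi z) n) -> z <> RtoC 0 ->
  Cmod (Gf g n z) = Cmod (phi z) ^ n / Cmod z ^ n.
Proof.
  intros Hg0 Hz. unfold Gf. rewrite Hg0, Cmod_mult, Cmod_inv, !Cmod_cpow. reflexivity.
  apply cpow_nz; auto.
Qed.

Lemma schwarz_strict (phi : C -> C) (g : nat -> C -> C) (n : nat) (d : C) :
  (forall z, in_disk z -> in_disk (phi z)) -> phi (RtoC 0) = RtoC 0 ->
  cderiv_at phi (RtoC 0) d -> Cmod d < 1 -> (1 <= n)%nat -> tower g ->
  g 0%nat = (fun z => cpow (phi z) n) ->
  forall z, 0 < Cmod z < 1 -> Cmod (phi z) < Cmod z.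
Proof.
  intros Hmaps H0 Hd Hdl Hn Hg Hg0.
  set (G := Gf g n). set (G' := G'f g n).
  assert (GH : forall z, 0 < Cmod z < 1 -> cderiv_at G z (G' z) /\ ccont G' z) by (apply G_hyp; auto).
  assert (Hnz : forall z, 0 < Cmod z -> z <> RtoC 0) by (intros z Hz; apply (proj2 (Cmod_gt_0 _)); auto).
  assert (Hpow1 : forall x, 0 <= x < 1 -> x ^ n < 1) by (intros x Hx; apply pow_lt_1_compat; auto; lia).
  assert (Near : exists e0, 0 < e0 < 1 /\ forall z, 0 < Cmod z <= e0 -> Cmod (G z) < 1).
  { apply cderiv_ed in Hd. pose proof (Cmod_ge_0 d).
    destruct (Hd ((1 - Cmod d) / 2)) as [dl [Hdl0 Hdl1]]; [lra|].
    exists (Rmin (dl / 2) (1 / 2)). split. split. apply Rmin_pos; lra.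
    pose proof (Rmin_r (dl/2) (1/2)); lra.
    intros z Hz. 
    assert (Hz1 : Cmod (z - RtoC 0) < dl).
    { replace (z - RtoC 0)%C with z by ring. pose proof (Rmin_l (dl/2) (1/2)). lra. }
    specialize (Hdl1 z Hz1). rewrite H0 in Hdl1.
    replace (z - RtoC 0)%C with z in Hdl1 by ring.
    replace (phi z - RtoC 0 - d * z)%C with (phi z - d * z)%C in Hdl1 by ring.
    pose proof (Cmod_tri3 (phi z) (d * z)). rewrite Cmod_mult in H1.
    assert (Hr : Cmod (phi z) <= (1 + Cmod d) / 2 * Cmod z) by nra.
    unfold G. rewrite (Gmod g n phi z Hg0) by (apply Hnz; lra).
    assert (0 < Cmod z ^ n) by (apply pow_lt; lra).
    apply (Rmult_lt_reg_r (Cmod z ^ n)); auto. unfold Rdiv. rewrite Rmult_assoc, Rinv_l, Rmult_1_r by lra.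
    rewrite Rmult_1_l.
    apply Rle_lt_trans with (((1 + Cmod d) / 2 * Cmod z) ^ n).
    apply pow_incr. split; auto. apply Cmod_ge_0.
    rewrite Rpow_mult_distr. 
    assert (((1 + Cmod d) / 2) ^ n < 1) by (apply Hpow1; lra). nra. }
  destruct Near as [e0 [He0 Hnear]].
  assert (Circ : forall R1 z, 0 < R1 < 1 -> Cmod z = R1 -> Cmod (G z) < / R1 ^ n).
  { intros R1 z HR Hz. unfold G. rewrite (Gmod g n phi z Hg0) by (apply Hnz; lra).
    rewrite Hz. assert (Cmod (phi z) ^ n < 1).
    { apply Hpow1. split. apply Cmod_ge_0. apply Hmaps. unfold in_disk; lra. }
    assert (0 < R1 ^ n) by (apply pow_lt; lra). unfold Rdiv.
    apply (Rmult_lt_compat_r (/ R1 ^ n)) in H; [|apply Rinv_0_lt_compat; auto]. lra. }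
  assert (S1 : forall z, 0 < Cmod z < 1 -> Cmod (G z) <= 1).
  { intros z0 Hz0. apply Rnot_lt_le. intro HL. set (L := Cmod (G z0)) in *.
    set (x := Rmin ((1 - Cmod z0) / 2) ((1 - / L) / (INR n + 1))).
    assert (HL' : 0 < / L < 1) by (split; [apply Rinv_0_lt_compat; lra| rewrite <- Rinv_1; apply Rinv_lt_contravar; lra]).
    assert (Hnp : 0 < INR n + 1) by (pose proof (pos_INR n); lra).
    assert (Hx : 0 < x) by (apply Rmin_pos; [lra|apply Rdiv_lt_0_compat; lra]).
    assert (Hx1 : x <= (1 - Cmod z0) / 2) by apply Rmin_l.
    assert (Hx2 : x <= (1 - / L) / (INR n + 1)) by apply Rmin_r.
    set (R1 := 1 - x).
    assert (HR1 : Cmod z0 < R1 < 1) by (unfold R1; lra).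
    assert (HR1n : / R1 ^ n < L).
    { pose proof (Cmod_ge_0 z0). assert (Hx3 : x <= 1) by lra. pose proof (bernoulli x n (conj (Rlt_le _ _ Hx) Hx3)).
      assert (INR n * x < 1 - / L).
      { apply Rle_lt_trans with (INR n * ((1 - / L) / (INR n + 1))).
        apply Rmult_le_compat_l; auto. apply pos_INR.
        apply (Rmult_lt_reg_r (INR n + 1)); auto. unfold Rdiv.
        rewrite Rmult_assoc, (Rmult_assoc (1 - / L)), Rinv_l, Rmult_1_r by lra. 
        pose proof (pos_INR n). nra. }
      assert (/ L < R1 ^ n) by (unfold R1; lra).
      assert (0 < R1 ^ n) by (apply pow_lt; lra).
      rewrite <- (Rinv_inv L). apply Rinv_lt_contravar; auto. apply Rmult_lt_0_compat; auto. lra. }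
    set (e1 := Rmin e0 (Cmod z0)).
    assert (He1 : 0 < e1 <= Cmod z0) by (split; [apply Rmin_pos; lra | apply Rmin_r]).
    assert (He1' : e1 <= e0) by apply Rmin_l.
    set (h := fun u v => Cmod (G (RtoC u * E v)%C)).
    assert (Hcont : forall u v, e1 <= u <= R1 -> - PI <= v <= PI -> cont2 h u v).
    { intros u v Hu Hv eps He.
      assert (Hc2 : c2 (fun a b => G (RtoC 0 + RtoC a * E b)%C) u v).
      { apply (c2_comp G (fun a b => RtoC 0 + RtoC a * E b)%C). eapply cderiv_ccont.
        apply GH. rewrite Cmod_circ, Rabs_pos_eq; lra. apply c2_circ. }
      destruct (Hc2 eps He) as [dl [Hdl0 Hdl1]]. exists dl; split; auto.
      intros u' v' Hu' Hv'. specialize (Hdl1 u' v' Hu' Hv').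
      unfold h. replace (RtoC u' * E v')%C with (RtoC 0 + RtoC u' * E v')%C by ring.
      replace (RtoC u * E v)%C with (RtoC 0 + RtoC u * E v)%C by ring.
      pose proof (Cmod_tri3 (G (RtoC 0 + RtoC u' * E v')%C) (G (RtoC 0 + RtoC u * E v)%C)) as T1.
      pose proof (Cmod_tri3 (G (RtoC 0 + RtoC u * E v)%C) (G (RtoC 0 + RtoC u' * E v')%C)) as T2.
      rewrite Cmod_sym in T2. apply Rabs_def1; lra. }
    destruct (evt2 h e1 R1 (- PI) PI) as [u0 [v0 [Hu0 [Hv0 Hmax]]]]; try lra.
    { pose proof PI_RGT_0; lra. }
    exact Hcont.
    set (Mx := h u0 v0).
    destruct (polar z0) as [th0 [Hth0 Ez0]]. apply Hnz; lra.
    assert (HLM : L <= Mx).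
    { unfold L. rewrite Ez0. apply Hmax; lra. }
    assert (Hbound : forall z, 0 < Cmod z <= R1 -> Cmod (G z) <= Mx).
    { intros z Hz. destruct (Rlt_or_le (Cmod z) e1) as [Hlt|Hge].
      - assert (Cmod (G z) < 1) by (apply Hnear; lra). lra.
      - destruct (polar z) as [th [Hth Ez]]. apply Hnz; lra.
        rewrite Ez. apply Hmax; lra. }
    assert (Hu0R : u0 < R1).
    { destruct (Rle_lt_or_eq_dec u0 R1 (proj2 Hu0)) as [Hlt|Heq]; [exact Hlt|]. exfalso.
      assert (HC : Cmod (G (RtoC u0 * E v0)%C) < / R1 ^ n).
      { apply Circ; [lra|]. rewrite Cmod_mult, Cmod_E, Cmod_R, Rabs_pos_eq; lra. }
      fold (h u0 v0) in HC. fold Mx in HC. lra. }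
    set (ws := (RtoC u0 * E v0)%C).
    assert (Hws : Cmod ws = u0) by (unfold ws; rewrite Cmod_mult, Cmod_E, Cmod_R, Rabs_pos_eq; lra).
    pose proof (ray_lemma G G' ws R1 Mx GH ltac:(lra) ltac:(lra) Hbound eq_refl) as Hray.
    specialize (Hray (e1 / (2 * u0))).
    assert (Ht : 0 < e1 / (2 * u0) <= 1).
    { split. apply Rdiv_lt_0_compat; lra. apply (Rmult_le_reg_r (2 * u0)); [lra|].
      unfold Rdiv. rewrite Rmult_assoc, Rinv_l by lra. lra. }
    specialize (Hray Ht).
    assert (HC : Cmod (G (RtoC (e1 / (2 * u0)) * ws)%C) < 1).
    { apply Hnear. rewrite Cmod_mult, Cmod_R, Rabs_pos_eq, Hws by lra.
      replace (e1 / (2 * u0) * u0) with (e1 / 2) by (field; lra). lra. }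
    lra. }
  assert (S2 : forall z, 0 < Cmod z < 1 -> Cmod (G z) < 1).
  { intros z0 Hz0. destruct (Rlt_or_le (Cmod (G z0)) 1) as [|Hge]; auto. exfalso.
    assert (HM : Cmod (G z0) = 1) by (pose proof (S1 z0 Hz0); lra).
    set (R1 := (Cmod z0 + 1) / 2).
    pose proof (ray_lemma G G' z0 R1 1 GH ltac:(unfold R1; lra) ltac:(unfold R1; lra)
                 ltac:(intros z Hz; apply S1; unfold R1 in Hz; lra) HM) as Hray.
    set (t := Rmin 1 (e0 / Cmod z0)).
    assert (Ht : 0 < t <= 1) by (split; [apply Rmin_pos; [lra|apply Rdiv_lt_0_compat; lra]|apply Rmin_l]).
    specialize (Hray t Ht).
    assert (HC : Cmod (G (RtoC t * z0)%C) < 1).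
    { apply Hnear. rewrite Cmod_mult, Cmod_R, Rabs_pos_eq by lra. split. nra.
      assert (Ht2 : t <= e0 / Cmod z0) by apply Rmin_r.
      apply (Rmult_le_compat_r (Cmod z0)) in Ht2; [|lra]. unfold Rdiv in Ht2.
      rewrite Rmult_assoc, Rinv_l, Rmult_1_r in Ht2 by lra. lra. }
    lra. }
  intros z Hz. specialize (S2 z Hz). unfold G in S2. rewrite (Gmod g n phi z Hg0) in S2 by (apply Hnz; lra).
  apply Rnot_le_lt. intro Hle.
  assert (Cmod z ^ n <= Cmod (phi z) ^ n) by (apply pow_incr; split; [apply Cmod_ge_0|auto]; lra).
  assert (0 < Cmod z ^ n) by (apply pow_lt; lra).
  assert (1 <= Cmod (phi z) ^ n / Cmod z ^ n).
  { apply (Rmult_le_reg_r (Cmod z ^ n)); auto. unfold Rdiv. rewrite Rmult_assoc, Rinv_l by lra. lra. }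
  lra.
Qed.

Lemma exp_pow_nat a n : exp a ^ n = exp (INR n * a).
Proof.
  induction n. simpl. rewrite Rmult_0_l, exp_0. reflexivity.
  rewrite S_INR. simpl. rewrite IHn, <- exp_plus. f_equal. ring.
Qed.

Lemma final_bound (phi : C -> C) g m n c r0 q : tower g -> g 0%nat = (fun z => cpow (phi z) n) ->
  c = Cdiv (g m (RtoC 0)) (RtoC (INR (fact m))) -> 0 < r0 < 1 -> 0 <= q ->
  (forall z, Cmod z = r0 -> Cmod (phi z) <= q) -> Cmod c <= q ^ n / r0 ^ m.
Proof.
  intros Hg Hg0 Hc Hr Hq Hb. rewrite Hc. apply cauchy_coef; auto.
  intros z Hz. rewrite Hg0. cbv beta. rewrite Cmod_cpow. apply pow_incr. split.
  apply Cmod_ge_0. apply Hb; auto.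
Qed.

Theorem mainTheorem10 (phi : C -> C)
  (Hhol : holo_on_disk phi)
  (Hmaps : forall z, in_disk z -> in_disk (phi z))
  (H0 : phi (RtoC 0) = RtoC 0)
  (Hd : exists d, cderiv_at phi (RtoC 0) d /\ Cmod d < 1) :
  exists rho : R, 0 < rho /\
    forall (m n : nat) (c : C),
      is_taylor_coef (fun z => cpow (phi z) n) m c ->
      Cmod c <= exp (- (1/2) * ((1 + rho) * INR n - INR m)).
Proof.
  destruct Hd as [d [Hd Hdl]].
  set (r0 := exp (- (1/2))).
  assert (Hr0 : 0 < r0 < 1).
  { split. apply exp_pos. unfold r0. apply Rlt_le_trans with (exp 0); [apply exp_increasing; lra| rewrite exp_0; lra]. }
  assert (Hr0m : forall m, / r0 ^ m = exp (INR m / 2)).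
  { intros m. unfold r0. rewrite exp_pow_nat. rewrite <- exp_Ropp. f_equal. field. }
  destruct (classic (exists n m c, (1 <= n)%nat /\ is_taylor_coef (fun z => cpow (phi z) n) m c))
    as [[n0 [m0 [c0 [Hn0 Htc]]]] | Hno].
  - destruct Htc as [g [Hg0 [Hgt _]]].
    assert (Sch : forall z, 0 < Cmod z < 1 -> Cmod (phi z) < Cmod z).
    { apply (schwarz_strict phi g n0 d); auto. }
    assert (Hcont : forall th, continuity_pt (fun th => Cmod (phi (RtoC r0 * E th)%C)) th).
    { intros th. apply rcont_Cmod. apply (rcont_comp phi (fun th => RtoC r0 * E th)%C).
      - destruct (Hhol (RtoC r0 * E th)%C) as [l Hl].
        { unfold in_disk. rewrite Cmod_mult, Cmod_E, Cmod_R, Rabs_pos_eq; lra. }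
        eapply cderiv_ccont; eauto.
      - apply (rcont_ext (fun b => RtoC 0 + RtoC r0 * E b)%C). intros; ring. apply rcont_circ. }
    destruct (continuity_ab_maj (fun th => Cmod (phi (RtoC r0 * E th)%C)) (- PI) PI) as [thm [Hthm Hthm2]].
    { pose proof PI_RGT_0; lra. }
    { intros; apply Hcont. }
    set (q := Cmod (phi (RtoC r0 * E thm)%C)).
    assert (Hq : q < r0).
    { unfold q. replace r0 with (Cmod (RtoC r0 * E thm)%C) at 2 by (rewrite Cmod_mult, Cmod_E, Cmod_R, Rabs_pos_eq; lra).
      apply Sch. rewrite Cmod_mult, Cmod_E, Cmod_R, Rabs_pos_eq; lra. }
    assert (Hq0 : 0 <= q) by apply Cmod_ge_0.
    assert (Hbnd : forall z, Cmod z = r0 -> Cmod (phi z) <= q).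
    { intros z Hz. destruct (polar z) as [th [Hth Ez]].
      { apply (proj2 (Cmod_gt_0 _)). lra. }
      rewrite Ez, Hz. apply Hthm; auto. }
    set (q' := (q + r0) / 2).
    assert (Hq' : 0 < q' < r0) by (unfold q'; lra).
    exists (- 2 * ln q' - 1). split.
    { assert (ln q' < ln r0) by (apply ln_increasing; lra).
      unfold r0 in H. rewrite ln_exp in H. lra. }
    intros m n c [g' [Hg'0 [Hg't Hc]]].
    eapply Rle_trans.
    { apply (final_bound phi g' m n c r0 q'); auto; try lra.
      intros z Hz. specialize (Hbnd z Hz). unfold q'. lra. }
    unfold Rdiv. rewrite Hr0m. rewrite <- (exp_ln q') at 1 by lra.
    rewrite exp_pow_nat, <- exp_plus. right. f_equal. field.
  - exists 1. split; [lra|].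
    intros m n c [g' [Hg'0 [Hg't Hc]]].
    destruct n as [|n].
    + eapply Rle_trans.
      { apply (final_bound phi g' m 0 c r0 1); auto; try lra.
        intros z Hz. apply Rlt_le, Hmaps. unfold in_disk; lra. }
      unfold Rdiv. rewrite Hr0m. simpl. rewrite Rmult_1_l. right. f_equal. field.
    + exfalso. apply Hno. exists (S n), m, c. split; [lia|]. exists g'. auto.
Qed.
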